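(* Suppose $\sigma^2>0=\lambda(\mathbb R)$ (so $\psi(\beta)=\tfrac12\sigma^2\beta^2+\mu\beta$ and $\psi^h(\beta)=\mu\frac{e^{\beta h}-e^{-\beta h}}{2h}+\sigma^2\frac{e^{\beta h}+e^{-\beta h}-2}{2h^2}$), and let $q\ge0$. If $q=\mu=0$, then $\Delta^{(q)}_W(x,h)=0$ for all $h\in(0,h_\star)$ and $x\in\mathbb Z_h^{++}$. If $q\vee|\mu|>0$, then: (i) there exist $A_0,h_0\in(0,\infty)$ such that for all $h\in(0,h_0)$ and all $x\in\mathbb Z_h^{++}$ with $xh^2\le1$: $|\Delta^{(q)}_W(x,h)|\le A_0h^2(1+x)e^{\alpha_+x}$; (ii) for any nested sequence $h_n\downarrow0$ (i.e. $h_n/h_{n+1}\in\mathbb N$) and any $x\in\bigcup_n\mathbb Z_{h_n}^{++}$, $$\lim_{n\to\infty}\frac{\Delta^{(q)}_W(x,h_n)}{h_n^2}=\frac{q^2}{2(\mu^2+2\sigma^2q)}W^{(q)}(x)+\frac{x}{\sqrt{\mu^2+2\sigma^2q}}\bigl(e^{\alpha_+x}\theta_+-e^{\alpha_-x}\theta_-\bigr)$$ (for $q=0$ this limit equals $-\frac23\frac{\mu^2x}{(\sigma^2)^3}e^{-2\mu x/\sigma^2}$), where $\alpha_\pm=\frac{-\mu\pm\sqrt{\mu^2+2q\sigma^2}}{\sigma^2}$ and $\theta_\pm=\frac{\mu^3\sqrt{2q\sigma^2+\mu^2}\pm(\frac12q^2(\sigma^2)^2-\mu^4-\mu^2\sig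ma^2q)}{3(\sigma^2)^3\sqrt{2q\sigma^2+\mu^2}}$.
   Context: $X$ is the Lévy process $\sigma B_t+\mu t$ ($B$ standard Brownian motion, $\sigma^2>0$). For $h>0$, $\mathbb Z_h=h\mathbb Z$, $\mathbb Z_h^{++}=\mathbb Z_h\cap(0,\infty)$; $h_\star>0$ is such that for $h\in(0,h_\star)$ the function $\psi^h$ above is the Laplace exponent of a compound Poisson process on $\mathbb Z_h$. For $q\ge0$: $\Phi(q)$, $\Phi^h(q)$ are the largest roots of $\psi=q$, $\psi^h=q$ on $[0,\infty)$; $W^{(q)}$ vanishes on $(-\infty,0)$ and is the continuous nondecreasing function on $[0,\infty)$ with Laplace transform $1/(\psi(\beta)-q)$ for $\beta>\Phi(q)$ (explicitly $W^{(q)}(x)=(e^{\alpha_+x}-e^{\alpha_-x})/\sqrt{\mu^2+2\sigma^2q}$ when $q\vee|\mu|>0$); $W^{(q)}_h$ vanishes on $(-\infty,0)$ and on $[0,\infty)$ is the unique right-continuous function constant on each $[kh,(k+1)h)$, of exponential order, with Laplace transform $\frac{e^{\beta h}-1}{\beta h(\psi^h(\beta)-q)}$ for $\beta>\Phi^h(q)$. $\Delta^{(q)}_W(x,h):=W^{(q)}(x)-W^{(q)}_h(x-h)$. *)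

(* Defs.v *)
From Stdlib Require Import Reals Lra.
Open Scope R_scope.

Definition psi (sigma2 mu b : R) : R := / 2 * sigma2 * b ^ 2 + mu * b.

Definition psih (sigma2 mu h b : R) : R :=
  mu * (exp (b * h) - exp (- (b * h))) / (2 * h)
  + sigma2 * (exp (b * h) + exp (- (b * h)) - 2) / (2 * h ^ 2).

(* h_star : for h in (0,hstar), psih is the Laplace exponent of a compound
   Poisson process on Z_h, i.e. psih b = lp (e^{bh}-1) + lm (e^{-bh}-1) with
   nonnegative jump intensities lp = sigma2/(2h^2)+mu/(2h), lm = sigma2/(2h^2)-mu/(2h). *)
Definition hstar_ok (sigma2 mu hstar : R) : Prop :=
  forall h, 0 < h < hstar ->
    0 <= sigma2 / (2 * h ^ 2) + mu / (2 * h) /\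
    0 <= sigma2 / (2 * h ^ 2) - mu / (2 * h).

Definition Zhpp (h x : R) : Prop := exists k : nat, (1 <= k)%nat /\ x = INR k * h.

Definition disc (sigma2 mu q : R) : R := sqrt (mu ^ 2 + 2 * sigma2 * q).
Definition alpha_p (sigma2 mu q : R) : R := (- mu + disc sigma2 mu q) / sigma2.
Definition alpha_m (sigma2 mu q : R) : R := (- mu - disc sigma2 mu q) / sigma2.

(* For
   q \/ |mu| > 0 it is the explicit formula of the context; for q = mu = 0
   (psi b = sigma2 b^2 / 2) it is 2x/sigma2, whose Laplace transform is 1/psi. *)
Definition W (sigma2 mu q x : R) : R :=
  if Rlt_dec x 0 then 0 else
  if Rlt_dec 0 (Rmax q (Rabs mu)) then
    (exp (alpha_p sigma2 mu q * x) - exp (alpha_m sigma2 mu q * x)) / disc sigma2 mu q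
  else 2 * x / sigma2.

Definition laplace_is (f : R -> R) (b L : R) : Prop :=
  (forall T, 0 <= T -> inhabited (Riemann_integrable (fun x => exp (- (b * x)) * f x) 0 T)) /\
  (forall eps, 0 < eps -> exists M, forall T
      (pr : Riemann_integrable (fun x => exp (- (b * x)) * f x) 0 T),
      M <= T -> Rabs (RiemannInt pr - L) < eps).

(* beta > Phi^h(q), where Phi^h(q) is the largest root of psih = q on [0,oo). *)
Definition above_Phih (sigma2 mu h q b : R) : Prop :=
  0 < b /\ forall r, 0 <= r -> psih sigma2 mu h r = q -> r < b.

Definition is_Wh (sigma2 mu q h : R) (Wh : R -> R) : Prop :=
  (forall x, x < 0 -> Wh x = 0) /\
  (exists w : nat -> R, forall (k : nat) x,
      INR k * h <= x < (INR k + 1) * h -> Wh x = w k) /\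
  (exists C c, forall x, 0 <= x -> Rabs (Wh x) <= C * exp (c * x)) /\
  (forall b, above_Phih sigma2 mu h q b ->
      laplace_is Wh b ((exp (b * h) - 1) / (b * h * (psih sigma2 mu h b - q)))).

Definition DeltaW (sigma2 mu q : R) (Wh : R -> R) (x h : R) : R :=
  W sigma2 mu q x - Wh (x - h).

Definition theta_p (sigma2 mu q : R) : R :=
  (mu ^ 3 * disc sigma2 mu q
   + (/ 2 * q ^ 2 * sigma2 ^ 2 - mu ^ 4 - mu ^ 2 * sigma2 * q))
  / (3 * sigma2 ^ 3 * disc sigma2 mu q).
Definition theta_m (sigma2 mu q : R) : R :=
  (mu ^ 3 * disc sigma2 mu q
   - (/ 2 * q ^ 2 * sigma2 ^ 2 - mu ^ 4 - mu ^ 2 * sigma2 * q))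
  / (3 * sigma2 ^ 3 * disc sigma2 mu q).

Definition delta_limit (sigma2 mu q x : R) : R :=
  q ^ 2 / (2 * (mu ^ 2 + 2 * sigma2 * q)) * W sigma2 mu q x
  + x / disc sigma2 mu q *
    (exp (alpha_p sigma2 mu q * x) * theta_p sigma2 mu q
     - exp (alpha_m sigma2 mu q * x) * theta_m sigma2 mu q).

(* Main.v *)
Require Import Defs.
From Stdlib Require Import Reals Lra Lia FunctionalExtensionality ZArith.
From Coquelicot Require Import Coquelicot.
Require Import Defs.
Open Scope R_scope.

Fixpoint Pe (n:nat) (t:R) : R :=
  match n with 0%nat => 0 | S m => Pe m t + t^m / INR (Factorial.fact m) end.

Lemma Pe_deriv : forall n t, derivable_pt_lim (Pe (S n)) t (Pe n t).
Proof.
  induction n; intros t.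
  - simpl. replace (fun t0 => 0 + 1 / 1) with (fct_cte 1).
    + apply derivable_pt_lim_const.
    + apply functional_extensionality; intros; unfold fct_cte; field.
  - change (Pe (S (S n))) with (fun s => Pe (S n) s + s ^ (S n) / INR (Factorial.fact (S n))).
    change (Pe (S n) t) with (Pe n t + t ^ n / INR (Factorial.fact n)).
    apply (derivable_pt_lim_plus (Pe (S n)) (fun s => s ^ (S n) / INR (Factorial.fact (S n)))).
    + apply IHn.
    + assert (Hf : INR (Factorial.fact n) <> 0) by (apply not_0_INR; apply Factorial.fact_neq_0).
      replace (fun s => s ^ S n / INR (Factorial.fact (S n))) with
        (mult_real_fct (/ INR (Factorial.fact (S n))) (fun s => s ^ S n)).
      2:{ apply functional_extensionality; intros; unfold mult_real_fct, Rdiv; ring. }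
      replace (t ^ n / INR (Factorial.fact n)) with
        (/ INR (Factorial.fact (S n)) * (INR (S n) * t ^ Init.Nat.pred (S n))).
      * apply derivable_pt_lim_scal, derivable_pt_lim_pow.
      * simpl Init.Nat.pred. change (Factorial.fact (S n)) with (S n * Factorial.fact n)%nat; rewrite mult_INR.
        field. split; [exact Hf| apply not_0_INR; lia].
Qed.

Lemma Pe_S0 : forall n, Pe (S n) 0 = 1.
Proof.
  induction n. simpl; field.
  change (Pe (S (S n)) 0) with (Pe (S n) 0 + 0 ^ (S n) / INR (Factorial.fact (S n))).
  rewrite IHn. simpl. lra.
Qed.

Lemma exp_taylor : forall n t, Rabs (exp t - Pe n t) <= Rabs t ^ n * exp (Rabs t).
Proof.
  induction n; intros t.
  - simpl. rewrite Rminus_0_r, Rabs_pos_eq by (left; apply exp_pos).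
    rewrite Rmult_1_l. destruct (Rle_dec t (Rabs t)) as [H|H].
    + destruct H as [H|H]; [left; apply exp_increasing; exact H| rewrite <- H; lra].
    + exfalso; apply H, Rle_abs.
  - set (f := fun s => exp s - Pe (S n) s).
    assert (Hd : forall c, derivable_pt_lim f c (exp c - Pe n c)).
    { intros c. unfold f. apply (derivable_pt_lim_minus exp (Pe (S n))).
      apply derivable_pt_lim_exp. apply Pe_deriv. }
    assert (H0 : f 0 = 0) by (unfold f; rewrite Pe_S0, exp_0; ring).
    assert (Hbound : forall c, Rabs c <= Rabs t -> Rabs (exp c - Pe n c) <= Rabs t ^ n * exp (Rabs t)).
    { intros c Hc. eapply Rle_trans. apply IHn. apply Rmult_le_compat.
      apply pow_le, Rabs_pos. left; apply exp_pos. apply pow_incr; split; [apply Rabs_pos|exact Hc].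
      destruct Hc as [Hc|Hc]; [left; apply exp_increasing; exact Hc| rewrite Hc; lra]. }
    change (Rabs (f t) <= Rabs t ^ S n * exp (Rabs t)).
    destruct (Rtotal_order t 0) as [Ht|[Ht|Ht]].
    + destruct (MVT_cor2 f (fun c => exp c - Pe n c) t 0 Ht (fun c _ => Hd c)) as [c [Hc1 Hc2]].
      rewrite H0 in Hc1. replace (f t) with (- ((exp c - Pe n c) * (0 - t))) by lra.
      rewrite Rabs_Ropp, Rabs_mult. simpl.
      replace (Rabs (0 - t)) with (Rabs t) by (rewrite <- Rabs_Ropp; f_equal; ring).
      rewrite (Rmult_comm (Rabs t)), Rmult_assoc, (Rmult_comm (Rabs t)), <- Rmult_assoc.
      apply Rmult_le_compat_r. apply Rabs_pos. apply Hbound.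
      rewrite !Rabs_left by lra. lra.
    + subst t. rewrite H0, Rabs_R0. simpl. lra.
    + destruct (MVT_cor2 f (fun c => exp c - Pe n c) 0 t Ht (fun c _ => Hd c)) as [c [Hc1 Hc2]].
      rewrite H0 in Hc1. replace (f t) with ((exp c - Pe n c) * (t - 0)) by lra.
      rewrite Rabs_mult. simpl.
      replace (t - 0) with t by ring.
      rewrite (Rmult_comm (Rabs t)), Rmult_assoc, (Rmult_comm (Rabs t)), <- Rmult_assoc.
      apply Rmult_le_compat_r. apply Rabs_pos. apply Hbound.
      rewrite !Rabs_right by lra. lra.
Qed.

Lemma exp_taylor1 : forall t, Rabs (exp t - 1) <= Rabs t * exp (Rabs t).
Proof. intros t. pose proof (exp_taylor 1 t) as H. simpl in H. replace (0 + 1/1) with 1 in H by field. lra. Qed.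

Lemma exp_taylor2 : forall t, Rabs (exp t - 1 - t) <= t ^ 2 * exp (Rabs t).
Proof. intros t. pose proof (exp_taylor 2 t) as H. simpl in H.
  replace (exp t - (0 + 1 / 1 + t * 1 / 1)) with (exp t - 1 - t) in H by field.
  rewrite <- (pow2_abs t). simpl. lra. Qed.

Lemma exp_taylor5 : forall t, Rabs (exp t - (1 + t + t^2/2 + t^3/6 + t^4/24)) <= Rabs t ^ 5 * exp (Rabs t).
Proof. intros t. pose proof (exp_taylor 5 t) as H.
  replace (Pe 5 t) with (1 + t + t^2/2 + t^3/6 + t^4/24) in H; [exact H|]. simpl. field. Qed.

Definition D0 (h : R) : Prop := 0 < h.

Lemma lim_intro : forall f l, (forall eps, 0 < eps -> exists del, 0 < del /\
   forall h, 0 < h < del -> Rabs (f h - l) < eps) -> limit1_in f D0 l 0.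
Proof.
  intros f l H eps Heps. destruct (H eps Heps) as [del [Hd Hh]].
  exists del; split; [exact Hd|]. intros x [Hx1 Hx2].
  unfold D0 in Hx1. simpl in *. unfold R_dist in *.
  apply Hh. rewrite Rminus_0_r, Rabs_pos_eq in Hx2 by lra. lra.
Qed.

Lemma lim_elim : forall f l, limit1_in f D0 l 0 -> forall eps, 0 < eps -> exists del, 0 < del /\
   forall h, 0 < h < del -> Rabs (f h - l) < eps.
Proof.
  intros f l H eps Heps. destruct (H eps Heps) as [del [Hd Hh]].
  exists del; split; [exact Hd|]. intros h Hh'.
  apply (Hh h). split. unfold D0; lra. simpl. unfold R_dist.
  rewrite Rminus_0_r, Rabs_pos_eq by lra. lra.
Qed.

Lemma lim_const : forall c, limit1_in (fun _ => c) D0 c 0.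
Proof. intros c. apply lim_intro. intros eps He. exists 1. split. lra.
  intros. rewrite Rminus_eq_0, Rabs_R0. lra. Qed.

Lemma lim_id : limit1_in (fun h => h) D0 0 0.
Proof. apply lim_intro. intros eps He. exists eps. split. lra.
  intros. rewrite Rminus_0_r, Rabs_pos_eq; lra. Qed.

Lemma lim_ext_near : forall f g l, (exists del, 0 < del /\ forall h, 0 < h < del -> f h = g h) ->
  limit1_in g D0 l 0 -> limit1_in f D0 l 0.
Proof.
  intros f g l [d0 [Hd0 Hfg]] Hg. apply lim_intro. intros eps He.
  destruct (lim_elim g l Hg eps He) as [d1 [Hd1 H1]].
  exists (Rmin d0 d1). split. apply Rmin_pos; lra.
  intros h Hh. pose proof (Rmin_l d0 d1); pose proof (Rmin_r d0 d1).
  rewrite Hfg by lra. apply H1; lra.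
Qed.

Lemma lim_squeeze : forall f g l, (exists del, 0 < del /\ forall h, 0 < h < del -> Rabs (f h - l) <= g h) ->
  limit1_in g D0 0 0 -> limit1_in f D0 l 0.
Proof.
  intros f g l [d0 [Hd0 Hfg]] Hg. apply lim_intro. intros eps He.
  destruct (lim_elim g 0 Hg eps He) as [d1 [Hd1 H1]].
  exists (Rmin d0 d1). split. apply Rmin_pos; lra.
  intros h Hh. pose proof (Rmin_l d0 d1); pose proof (Rmin_r d0 d1).
  eapply Rle_lt_trans. apply Hfg; lra. specialize (H1 h ltac:(lra)).
  rewrite Rminus_0_r in H1. eapply Rle_lt_trans. apply Rle_abs. exact H1.
Qed.

Lemma lim_cont : forall F f l, continuity_pt F l -> limit1_in f D0 l 0 ->
  limit1_in (fun h => F (f h)) D0 (F l) 0.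
Proof.
  intros F f l HF Hf. apply lim_intro. intros eps He.
  destruct (HF eps He) as [a [Ha HFa]].
  destruct (lim_elim f l Hf a Ha) as [d [Hd Hd']].
  exists d. split; [exact Hd|]. intros h Hh.
  destruct (Req_dec (f h) l) as [E|E].
  - rewrite E, Rminus_eq_0, Rabs_R0. exact He.
  - apply (HFa (f h)). split. split. exact I. intro Heq; apply E; auto. simpl. apply Hd'. exact Hh.
Qed.

Lemma lim_bound : forall f l, limit1_in f D0 l 0 -> exists del, 0 < del /\
  forall h, 0 < h < del -> Rabs (f h) <= Rabs l + 1.
Proof.
  intros f l H. destruct (lim_elim f l H 1 Rlt_0_1) as [d [Hd Hd']].
  exists d. split; [exact Hd|]. intros h Hh. specialize (Hd' h Hh).
  pose proof (Rabs_triang_inv (f h) l). lra.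
Qed.

Lemma lim_deriv : forall F l, derivable_pt_lim F 0 l -> F 0 = 0 ->
  limit1_in (fun h => F h / h) D0 l 0.
Proof.
  intros F l HF H0. apply lim_intro. intros eps He.
  destruct (HF eps He) as [[d Hd] Hd']. exists d. split; [exact Hd|].
  intros h Hh. specialize (Hd' h ltac:(intro; lra)). rewrite Rplus_0_l, H0, Rminus_0_r in Hd'.
  apply Hd'. simpl. rewrite Rabs_pos_eq; lra.
Qed.

Lemma lim_seq : forall f l (u : nat -> R), limit1_in f D0 l 0 -> (forall n, 0 < u n) ->
  Un_cv u 0 -> Un_cv (fun n => f (u n)) l.
Proof.
  intros f l u Hf Hu Hcv eps He.
  destruct (lim_elim f l Hf eps He) as [d [Hd Hd']].
  destruct (Hcv d Hd) as [N HN]. exists N. intros n Hn.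
  unfold R_dist. apply Hd'. specialize (HN n Hn). unfold R_dist in HN.
  rewrite Rminus_0_r, Rabs_pos_eq in HN by (left; apply Hu). split; [apply Hu|exact HN].
Qed.

Lemma lim_mult_id : forall f c, (exists del, 0 < del /\ forall h, 0 < h < del -> Rabs (f h) <= c) ->
  limit1_in (fun h => f h * h) D0 0 0.
Proof.
  intros f c [d [Hd Hb]]. apply lim_intro. intros eps He.
  assert (Hc : 0 <= c). { specialize (Hb (d/2) ltac:(lra)). pose proof (Rabs_pos (f (d/2))). lra. }
  exists (Rmin d (eps / (c + 1))). split. apply Rmin_pos. lra. apply Rdiv_lt_0_compat; lra.
  intros h Hh. pose proof (Rmin_l d (eps / (c + 1))); pose proof (Rmin_r d (eps / (c + 1))).
  rewrite Rminus_0_r, Rabs_mult, (Rabs_pos_eq h) by lra.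
  specialize (Hb h ltac:(lra)).
  assert (Hh2 : h < eps/(c+1)) by lra.
  assert (h * (c+1) < eps). { apply (Rmult_lt_compat_r (c+1)) in Hh2; [|lra].
    unfold Rdiv in Hh2; rewrite Rmult_assoc, Rinv_l, Rmult_1_r in Hh2 by lra. lra. }
  nra.
Qed.

Section Analytic.
Variables s2 mu q : R.
Hypothesis Hs2 : 0 < s2.
Hypothesis Hq : 0 <= q.
Hypothesis Hpos : 0 < Rmax q (Rabs mu).

Lemma D2pos : 0 < mu^2 + 2*s2*q.
Proof.
  unfold Rmax in Hpos. destruct (Rle_dec q (Rabs mu)).
  - assert (mu <> 0) by (intro E; rewrite E, Rabs_R0 in Hpos; lra).
    assert (0 < mu^2) by (apply pow_lt; exact (Rabs_pos_lt mu H) ) || (pose proof (pow2_gt_0 mu H); lra).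
    nra.
  - nra.
Qed.

Lemma Dpos : 0 < disc s2 mu q.
Proof. unfold disc. apply sqrt_lt_R0, D2pos. Qed.

Lemma DD : disc s2 mu q * disc s2 mu q = mu^2 + 2*s2*q.
Proof. unfold disc. apply sqrt_sqrt. left; apply D2pos. Qed.

Lemma psi_a : psi s2 mu (alpha_p s2 mu q) = q.
Proof. unfold psi, alpha_p. pose proof DD. field_simplify; [|lra]. replace (disc s2 mu q ^ 2) with (mu^2+2*s2*q) by (rewrite <- H; ring). field. lra. Qed.

Lemma psi_b : psi s2 mu (alpha_m s2 mu q) = q.
Proof. unfold psi, alpha_m. pose proof DD. field_simplify; [|lra]. replace (disc s2 mu q ^ 2) with (mu^2+2*s2*q) by (rewrite <- H; ring). field. lra. Qed.

Definition R0 (beta : R) : R := mu * beta^3 / 6 + s2 * beta^4 / 24.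

Lemma err_bound : forall B beta h, Rabs beta <= B -> 0 < h <= 1 ->
  Rabs (psih s2 mu h beta - psi s2 mu beta - h^2 * R0 beta)
    <= (Rabs mu + s2) * B^5 * exp B * h^3.
Proof.
  intros B beta h HB Hh.
  set (t := beta * h).
  set (e1 := exp t - (1 + t + t^2/2 + t^3/6 + t^4/24)).
  set (e2 := exp (-t) - (1 + (-t) + (-t)^2/2 + (-t)^3/6 + (-t)^4/24)).
  assert (He1 : Rabs e1 <= Rabs t ^ 5 * exp (Rabs t)) by apply exp_taylor5.
  assert (He2 : Rabs e2 <= Rabs t ^ 5 * exp (Rabs t)).
  { rewrite <- (Rabs_Ropp t). apply exp_taylor5. }
  assert (Hid : psih s2 mu h beta - psi s2 mu beta - h^2 * R0 beta
     = (mu * (e1 - e2) * h + s2 * (e1 + e2)) / (2 * h^2)).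
  { unfold psih, psi, R0, e1, e2. fold t. unfold t. field. lra. }
  rewrite Hid.
  set (K := Rabs t ^ 5 * exp (Rabs t)).
  assert (HK : K <= B^5 * h^5 * exp B).
  { unfold K, t. rewrite Rabs_mult, (Rabs_pos_eq h) by lra.
    rewrite Rpow_mult_distr. apply Rmult_le_compat.
    apply Rmult_le_pos; apply pow_le; [apply Rabs_pos|lra].
    left; apply exp_pos.
    apply Rmult_le_compat_r. apply pow_le; lra. apply pow_incr; split; [apply Rabs_pos|exact HB].
    assert (Rabs beta * h <= B) by (pose proof (Rabs_pos beta); nra).
    destruct H as [H|H]; [left; apply exp_increasing; exact H| rewrite H; lra]. }
  assert (Hnum : Rabs (mu * (e1 - e2) * h + s2 * (e1 + e2)) <= 2 * K * (Rabs mu * h + s2)).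
  { eapply Rle_trans. apply Rabs_triang.
    rewrite !Rabs_mult, (Rabs_pos_eq h), (Rabs_pos_eq s2) by lra.
    pose proof (Rabs_triang e1 (-e2)). rewrite Rabs_Ropp in H.
    pose proof (Rabs_triang e1 e2). pose proof (Rabs_pos mu).
    assert (He1' : Rabs e1 <= K) by exact He1. assert (He2' : Rabs e2 <= K) by exact He2. assert (Rabs (e1 - e2) <= 2 * K) by (unfold Rminus; lra).
    assert (Rabs (e1 + e2) <= 2 * K) by lra.
    assert (Rabs mu * Rabs (e1 - e2) * h <= Rabs mu * (2*K) * h) by (apply Rmult_le_compat_r; [lra|apply Rmult_le_compat_l; lra]).
    assert (s2 * Rabs (e1 + e2) <= s2 * (2*K)) by (apply Rmult_le_compat_l; lra). nra. }
  unfold Rdiv. rewrite Rabs_mult, Rabs_inv, (Rabs_pos_eq (2 * h^2)) by (pose proof (pow_lt h 2); nra).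
  apply (Rmult_le_reg_r (2 * h^2)). pose proof (pow_lt h 2); nra.
  rewrite Rmult_assoc, Rinv_l, Rmult_1_r by (pose proof (pow_lt h 2); nra).
  eapply Rle_trans. exact Hnum.
  assert (0 <= K) by (unfold K; apply Rmult_le_pos; [apply pow_le, Rabs_pos| left; apply exp_pos]).
  pose proof (Rabs_pos mu). pose proof (exp_pos B).
  assert (0 <= B) by (pose proof (Rabs_pos beta); lra).
  assert (0 <= B^5) by (apply pow_le; lra).
  assert (h^5 = h^3*h^2) by ring.
  assert (h^3 * h <= h^3) by (pose proof (pow_lt h 3); nra).
  assert (HH1 : 2 * K * (Rabs mu * h + s2) <= 2 * (B ^ 5 * h ^ 5 * exp B) * (Rabs mu * h + s2)) by (apply Rmult_le_compat_r; [nra|lra]).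
  eapply Rle_trans. exact HH1.
  assert (HH2 : B^5 * exp B * (Rabs mu * h^4 + s2 * h^3) <= B^5 * exp B * ((Rabs mu + s2) * h^3)).
  { apply Rmult_le_compat_l. nra. assert (h^4 = h^3*h) by ring. nra. }
  replace (2 * (B ^ 5 * h ^ 5 * exp B) * (Rabs mu * h + s2)) with (B^5 * exp B * (Rabs mu * h^4 + s2*h^3) * (2*h^2)) by ring.
  replace ((Rabs mu + s2) * B ^ 5 * exp B * h ^ 3 * (2 * h ^ 2)) with (B^5 * exp B * ((Rabs mu + s2) * h^3) * (2*h^2)) by ring.
  apply Rmult_le_compat_r. pose proof (pow_lt h 2); nra. exact HH2.
Qed.


Lemma lim_eq : forall f l l', limit1_in f D0 l 0 -> l = l' -> limit1_in f D0 l' 0.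
Proof. intros; subst; auto. Qed.

Lemma root_expansion : forall (Phi : R -> R) al,
  limit1_in Phi D0 al 0 -> psi s2 mu al = q -> s2 * al + mu <> 0 ->
  (exists del, 0 < del /\ forall h, 0 < h < del -> psih s2 mu h (Phi h) = q) ->
  limit1_in (fun h => (Phi h - al) / h^2) D0 (- R0 al / (s2 * al + mu)) 0.
Proof.
  intros Phi al HPhi Hal Hden [d0 [Hd0 Hroot]].
  set (den := fun h => s2 * (Phi h + al) / 2 + mu).
  set (E2 := fun h => (psih s2 mu h (Phi h) - psi s2 mu (Phi h) - h^2 * R0 (Phi h)) / h^2).
  assert (Hdenlim : limit1_in den D0 (s2 * al + mu) 0).
  { apply (lim_eq _ (s2 * (al + al) / 2 + mu)); [|field].
    unfold den. apply limit_plus; [|apply lim_const].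
    apply (limit_mul (fun h => s2 * (Phi h + al)) (fun _ => /2)); [|apply lim_const].
    apply limit_mul. apply lim_const. apply limit_plus. exact HPhi. apply lim_const. }
  destruct (lim_bound Phi al HPhi) as [d1 [Hd1 HB]].
  set (B := Rabs al + 1).
  set (C := (Rabs mu + s2) * B^5 * exp B).
  assert (HE2 : limit1_in E2 D0 0 0).
  { apply (lim_squeeze _ (fun h => C * h)).
    - exists (Rmin 1 d1). split. apply Rmin_pos; lra.
      intros h Hh. pose proof (Rmin_l 1 d1); pose proof (Rmin_r 1 d1).
      unfold E2. rewrite Rminus_0_r. unfold Rdiv. rewrite Rabs_mult, Rabs_inv.
      rewrite (Rabs_pos_eq (h^2)) by (apply pow_le; lra).
      apply (Rmult_le_reg_r (h^2)). apply pow_lt; lra.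
      rewrite Rmult_assoc, Rinv_l, Rmult_1_r by (apply pow_nonzero; lra).
      replace (C * h * h^2) with (C * h^3) by ring.
      apply err_bound. apply HB; lra. lra.
    - apply (lim_eq _ (C * 0)); [|ring]. apply limit_mul. apply lim_const. apply lim_id. }
  assert (HR0 : limit1_in (fun h => R0 (Phi h)) D0 (R0 al) 0).
  { apply lim_cont. unfold R0. reg. exact HPhi. }
  destruct (lim_elim den _ Hdenlim (Rabs (s2 * al + mu) / 2)) as [d2 [Hd2 Hden2]].
  { apply Rdiv_lt_0_compat. apply Rabs_pos_lt; exact Hden. lra. }
  apply (lim_ext_near _ (fun h => - (R0 (Phi h) + E2 h) / den h)).
  - exists (Rmin d0 d2). split. apply Rmin_pos; lra.
    intros h Hh. pose proof (Rmin_l d0 d2); pose proof (Rmin_r d0 d2).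
    specialize (Hden2 h ltac:(lra)). specialize (Hroot h ltac:(lra)).
    assert (Hdn : den h <> 0).
    { intro E. rewrite E in Hden2. rewrite Rminus_0_l, Rabs_Ropp in Hden2.
      pose proof (Rabs_pos_lt _ Hden). lra. }
    assert (Hq2 : (Phi h - al) * den h = psi s2 mu (Phi h) - psi s2 mu al).
    { unfold den, psi; cbv beta. field. }
    rewrite Hal, <- Hroot in Hq2.
    assert (HE : E2 h * h^2 = psih s2 mu h (Phi h) - psi s2 mu (Phi h) - h^2 * R0 (Phi h)).
    { unfold E2. field. lra. }
    assert (h^2 <> 0) by (apply pow_nonzero; lra).
    apply (Rmult_eq_reg_r (h^2 * den h)); [| apply Rmult_integral_contrapositive; tauto].
    replace ((Phi h - al) / h ^ 2 * (h ^ 2 * den h)) with ((Phi h - al) * den h) by (field; repeat split; try assumption; try (intro; lra)).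
    replace (- (R0 (Phi h) + E2 h) / den h * (h ^ 2 * den h)) with (- (R0 (Phi h) * h^2 + E2 h * h^2)) by (field; repeat split; try assumption; try (intro; lra)).
    rewrite HE, Hq2. ring.
  - apply (lim_eq _ (- (R0 al + 0) * / (s2 * al + mu))); [|field; auto].
    unfold Rdiv. apply limit_mul. apply limit_Ropp. apply limit_plus; auto.
    apply limit_inv; auto.
Qed.

Definition Eh h := sqrt (mu^2 + 2*s2*q + q^2*h^2).
Definition N1 h := s2 + q*h^2 + h * Eh h.
Definition N2 h := s2 + q*h^2 - h * Eh h.
Definition Mh h := s2 + mu*h.
Definition Phi1 h := ln (N1 h / Mh h) / h.
Definition Phi2 h := ln (N2 h / Mh h) / h.

Lemma Eh2 : forall h, Eh h * Eh h = mu^2 + 2*s2*q + q^2*h^2.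
Proof. intros. unfold Eh. apply sqrt_sqrt. pose proof D2pos. nra. Qed.

Lemma Eh_pos : forall h, 0 < Eh h.
Proof. intros. unfold Eh. apply sqrt_lt_R0. pose proof D2pos. nra. Qed.

Lemma Eh_ge : forall h, disc s2 mu q <= Eh h.
Proof. intros. unfold Eh, disc. apply sqrt_le_1_alt. nra. Qed.

Lemma Eh_le : forall h, 0 <= h -> Eh h <= disc s2 mu q + q * h.
Proof.
  intros h Hh. pose proof (Eh2 h). pose proof DD. pose proof Dpos. pose proof (Eh_pos h).
  destruct (Rle_dec (Eh h) (disc s2 mu q + q * h)) as [?|Hn]; [auto|].
  exfalso. apply Rnot_le_lt in Hn.
  assert (0 <= q * h) by nra.
  assert ((disc s2 mu q + q*h) * (disc s2 mu q + q*h) < Eh h * Eh h) by nra.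
  nra.
Qed.

Definition h1 := Rmin (Rmin 1 (s2 / (Rabs mu + 1))) (s2 / (disc s2 mu q + 1)).

Lemma h1_pos : 0 < h1.
Proof. unfold h1. pose proof Dpos. pose proof (Rabs_pos mu).
  apply Rmin_pos; [apply Rmin_pos|]; try apply Rdiv_lt_0_compat; lra. Qed.

Lemma small_facts : forall h, 0 < h < h1 ->
  h < 1 /\ 0 < Mh h /\ 0 < N2 h /\ 0 < N1 h.
Proof.
  intros h Hh. unfold h1 in Hh.
  pose proof (Rmin_l (Rmin 1 (s2 / (Rabs mu + 1))) (s2 / (disc s2 mu q + 1))).
  pose proof (Rmin_r (Rmin 1 (s2 / (Rabs mu + 1))) (s2 / (disc s2 mu q + 1))).
  pose proof (Rmin_l 1 (s2 / (Rabs mu + 1))). pose proof (Rmin_r 1 (s2 / (Rabs mu + 1))).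
  pose proof Dpos. pose proof (Rabs_pos mu).
  assert (Ha : h * (Rabs mu + 1) < s2).
  { assert (h < s2 / (Rabs mu + 1)) by lra.
    apply (Rmult_lt_compat_r (Rabs mu + 1)) in H5; [|lra].
    unfold Rdiv in H5. rewrite Rmult_assoc, Rinv_l, Rmult_1_r in H5 by lra. exact H5. }
  assert (Hb : h * (disc s2 mu q + 1) < s2).
  { assert (h < s2 / (disc s2 mu q + 1)) by lra.
    apply (Rmult_lt_compat_r (disc s2 mu q + 1)) in H5; [|lra].
    unfold Rdiv in H5. rewrite Rmult_assoc, Rinv_l, Rmult_1_r in H5 by lra. exact H5. }
  pose proof (Eh_le h ltac:(lra)). pose proof (Eh_pos h).
  unfold Mh, N1, N2. repeat split; try lra.
  - pose proof (Rle_abs (-mu)) as Hm. rewrite Rabs_Ropp in Hm. nra.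
  - nra.
  - nra.
Qed.

Lemma psih_root : forall h N, 0 < h -> 0 < N -> 0 < Mh h ->
  mu*h*(N^2 - (Mh h)^2) + s2*(N - Mh h)^2 - 2*q*h^2*(Mh h)*N = 0 ->
  psih s2 mu h (ln (N / Mh h) / h) = q.
Proof.
  intros h N Hh HN HM Hpoly. unfold psih.
  replace (ln (N / Mh h) / h * h) with (ln (N / Mh h)) by (field; lra).
  rewrite exp_Ropp, exp_ln by (apply Rdiv_lt_0_compat; lra).
  apply (Rmult_eq_reg_r (2 * h^2 * Mh h * N)); [| apply Rgt_not_eq, Rlt_gt; repeat apply Rmult_lt_0_compat; try lra; apply pow_lt; lra].
  field_simplify; try lra. 
Qed.


Lemma poly1 : forall h, mu*h*((N1 h)^2 - (Mh h)^2) + s2*(N1 h - Mh h)^2 - 2*q*h^2*(Mh h)*(N1 h) = 0.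
Proof. intros h. unfold N1, Mh. pose proof (Eh2 h) as H.
  match goal with |- ?L = 0 => replace L with (h^2*(s2+mu*h) * (Eh h * Eh h - (mu^2+2*s2*q+q^2*h^2))) by ring end.
  rewrite H; ring. Qed.

Lemma poly2 : forall h, mu*h*((N2 h)^2 - (Mh h)^2) + s2*(N2 h - Mh h)^2 - 2*q*h^2*(Mh h)*(N2 h) = 0.
Proof. intros h. unfold N2, Mh. pose proof (Eh2 h) as H.
  match goal with |- ?L = 0 => replace L with (h^2*(s2+mu*h) * (Eh h * Eh h - (mu^2+2*s2*q+q^2*h^2))) by ring end.
  rewrite H; ring. Qed.

Lemma psih_Phi1 : forall h, 0 < h < h1 -> psih s2 mu h (Phi1 h) = q.
Proof. intros h Hh. destruct (small_facts h Hh) as [? [? [? ?]]].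
  apply psih_root; try lra. apply poly1. Qed.

Lemma psih_Phi2 : forall h, 0 < h < h1 -> psih s2 mu h (Phi2 h) = q.
Proof. intros h Hh. destruct (small_facts h Hh) as [? [? [? ?]]].
  apply psih_root; try lra. apply poly2. Qed.

Lemma Phi1_lim : limit1_in Phi1 D0 (alpha_p s2 mu q) 0.
Proof.
  pose proof D2pos.
  assert (sqrt (mu^2+2*s2*q) > 0) by (apply sqrt_lt_R0; lra).
  apply (lim_ext_near _ (fun h => (ln (s2 + q*h^2 + h * sqrt (mu^2 + 2*s2*q + q^2*h^2)) - ln (s2 + mu*h)) / h)).
  - exists h1. split. apply h1_pos. intros h Hh. destruct (small_facts h Hh) as [? [? [? ?]]].
    unfold Phi1. rewrite ln_div by lra. reflexivity.
  - apply lim_deriv.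
    + apply is_derive_Reals. auto_derive.
      all: replace (mu * (mu * 1) + 2 * s2 * q + q * (q * 1) * (0 * (0 * 1))) with (mu^2+2*s2*q) by ring.
      * repeat split; nra.
      * unfold alpha_p, disc. 
        field; repeat split; try ((apply Rgt_not_eq; lra) || (apply Rlt_not_eq; lra)).
    + replace (s2 + q * 0 ^ 2 + 0 * sqrt (mu ^ 2 + 2 * s2 * q + q ^ 2 * 0 ^ 2)) with (s2 + mu * 0) by ring. ring.
Qed.

Lemma Phi2_lim : limit1_in Phi2 D0 (alpha_m s2 mu q) 0.
Proof.
  pose proof D2pos.
  assert (sqrt (mu^2+2*s2*q) > 0) by (apply sqrt_lt_R0; lra).
  apply (lim_ext_near _ (fun h => (ln (s2 + q*h^2 - h * sqrt (mu^2 + 2*s2*q + q^2*h^2)) - ln (s2 + mu*h)) / h)).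
  - exists h1. split. apply h1_pos. intros h Hh. destruct (small_facts h Hh) as [? [? [? ?]]].
    unfold Phi2. rewrite ln_div by lra. reflexivity.
  - apply lim_deriv.
    + apply is_derive_Reals. auto_derive.
      all: replace (mu * (mu * 1) + 2 * s2 * q + q * (q * 1) * (0 * (0 * 1))) with (mu^2+2*s2*q) by ring.
      * repeat split; nra.
      * unfold alpha_m, disc. 
        field; repeat split; try ((apply Rgt_not_eq; lra) || (apply Rlt_not_eq; lra)).
    + replace (s2 + q * 0 ^ 2 - 0 * sqrt (mu ^ 2 + 2 * s2 * q + q ^ 2 * 0 ^ 2)) with (s2 + mu * 0) by ring. ring.
Qed.


Lemma R0_a : R0 (alpha_p s2 mu q) = disc s2 mu q * theta_p s2 mu q.
Proof.
  pose proof DD as HD. pose proof Dpos as HDp. unfold R0, alpha_p, theta_p.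
  set (D := disc s2 mu q) in *. clearbody D.
  assert (Hq' : q = (D*D - mu^2)/(2*s2)) by (rewrite HD; field; lra).
  rewrite Hq'. field. lra.
Qed.

Lemma R0_b : R0 (alpha_m s2 mu q) = - (disc s2 mu q * theta_m s2 mu q).
Proof.
  pose proof DD as HD. pose proof Dpos as HDp. unfold R0, alpha_m, theta_m.
  set (D := disc s2 mu q) in *. clearbody D.
  assert (Hq' : q = (D*D - mu^2)/(2*s2)) by (rewrite HD; field; lra).
  rewrite Hq'. field. lra.
Qed.

Lemma den_a : s2 * alpha_p s2 mu q + mu = disc s2 mu q.
Proof. unfold alpha_p. field. lra. Qed.
Lemma den_b : s2 * alpha_m s2 mu q + mu = - disc s2 mu q.
Proof. unfold alpha_m. field. lra. Qed.

Lemma key1 : limit1_in (fun h => (Phi1 h - alpha_p s2 mu q) / h^2) D0 (- theta_p s2 mu q) 0.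
Proof.
  pose proof Dpos.
  apply (lim_eq _ (- R0 (alpha_p s2 mu q) / (s2 * alpha_p s2 mu q + mu))).
  apply root_expansion. apply Phi1_lim. apply psi_a. rewrite den_a; lra.
  exists h1. split. apply h1_pos. apply psih_Phi1.
  rewrite den_a, R0_a. field. lra.
Qed.

Lemma key2 : limit1_in (fun h => (Phi2 h - alpha_m s2 mu q) / h^2) D0 (- theta_m s2 mu q) 0.
Proof.
  pose proof Dpos.
  apply (lim_eq _ (- R0 (alpha_m s2 mu q) / (s2 * alpha_m s2 mu q + mu))).
  apply root_expansion. apply Phi2_lim. apply psi_b. rewrite den_b; lra.
  exists h1. split. apply h1_pos. apply psih_Phi2.
  rewrite den_b, R0_b. field. lra.
Qed.


Definition Gf x h := (exp (alpha_p s2 mu q * x) - exp (alpha_m s2 mu q * x)) / disc s2 mu q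
   - (exp (Phi1 h * x) - exp (Phi2 h * x)) / Eh h.

Lemma Eh_lim : limit1_in Eh D0 (disc s2 mu q) 0.
Proof.
  unfold Eh, disc. pose proof D2pos.
  apply (lim_cont sqrt (fun h => mu^2 + 2*s2*q + q^2*h^2) (mu^2 + 2*s2*q)).
  apply continuity_pt_sqrt; lra.
  apply (lim_eq _ (mu^2 + 2*s2*q + q^2 * (0 * 0))); [|ring].
  apply limit_plus. apply lim_const.
  apply (limit1_imp _ D0 D0). auto.
  replace (fun h => q^2 * h^2) with (fun h => q^2 * (h * h)) by (apply functional_extensionality; intros; ring).
  apply limit_mul. apply lim_const. apply limit_mul; apply lim_id.
Qed.

Lemma V_eq : forall h, h <> 0 ->
  (1 / disc s2 mu q - 1 / Eh h) / h^2 = q^2 / (disc s2 mu q * Eh h * (Eh h + disc s2 mu q)).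
Proof.
  intros h Hh. pose proof Dpos. pose proof (Eh_pos h). pose proof (Eh2 h). pose proof DD.
  assert (Hq2 : q^2 = (Eh h * Eh h - disc s2 mu q * disc s2 mu q) / h^2).
  { rewrite H1, H2. field. auto. }
  rewrite Hq2. field. repeat split; try auto; try ((apply Rgt_not_eq; lra) || (apply Rlt_not_eq; lra)).
Qed.

Lemma X_lim : forall (u : R -> R) c x, limit1_in (fun h => u h / h^2) D0 c 0 ->
  limit1_in (fun h => (exp (u h * x) - 1) / h^2) D0 (c * x) 0.
Proof.
  intros u c x Hu.
  destruct (lim_bound _ _ Hu) as [d [Hd HV]].
  set (V0 := Rabs c + 1).
  set (K := V0^2 * x^2 * exp (V0 * Rabs x)).
  apply (lim_ext_near _ (fun h => u h / h^2 * x + (exp (u h * x) - 1 - u h * x) / h^2)).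
  { exists 1. split. lra. intros h Hh. field. lra. }
  apply (lim_eq _ (c * x + 0)); [|ring].
  apply limit_plus. apply limit_mul. exact Hu. apply lim_const.
  apply (lim_squeeze _ (fun h => K * h)).
  - exists (Rmin 1 d). split. apply Rmin_pos; lra.
    intros h Hh. pose proof (Rmin_l 1 d); pose proof (Rmin_r 1 d).
    specialize (HV h ltac:(lra)).
    set (v := u h / h^2) in *.
    assert (Huv : u h = v * h^2) by (unfold v; field; lra).
    rewrite Huv, Rminus_0_r.
    pose proof (exp_taylor2 (v * h^2 * x)) as HT.
    assert (Hh2 : 0 < h^2) by (apply pow_lt; lra).
    assert (Hh2' : h^2 <= h) by nra.
    assert (Ht : Rabs (v * h^2 * x) <= V0 * Rabs x).
    { rewrite !Rabs_mult, (Rabs_pos_eq (h^2)) by lra.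
      pose proof (Rabs_pos v); pose proof (Rabs_pos x). 
      assert (h^2 <= 1) by lra. assert (Rabs v * h^2 <= V0) by (apply Rle_trans with (Rabs v); [rewrite <- (Rmult_1_r (Rabs v)) at 2; apply Rmult_le_compat_l; lra | exact HV]). apply Rmult_le_compat_r; lra. }
    assert (He : exp (Rabs (v * h^2 * x)) <= exp (V0 * Rabs x)).
    { destruct Ht as [Ht|Ht]; [left; apply exp_increasing; auto | rewrite Ht; lra]. }
    unfold Rdiv. rewrite Rabs_mult, Rabs_inv, (Rabs_pos_eq (h^2)) by lra.
    apply (Rmult_le_reg_r (h^2)); [lra|].
    rewrite Rmult_assoc, Rinv_l, Rmult_1_r by lra.
    eapply Rle_trans. exact HT.
    assert (Hv2 : v^2 <= V0^2).
    { rewrite <- (pow2_abs v). apply pow_incr. split. apply Rabs_pos. exact HV. }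
    replace ((v * h^2 * x)^2) with (v^2 * x^2 * (h^2 * h^2)) by ring.
    assert (0 <= x^2) by apply pow2_ge_0.
    assert (0 <= v^2) by apply pow2_ge_0.
    unfold K.
    assert (v^2 * x^2 * (h^2*h^2) <= V0^2 * x^2 * h * h^2).
    { assert (A : v^2 * x^2 * h^2 <= V0^2 * x^2 * h).
      { apply Rmult_le_compat. nra. lra. apply Rmult_le_compat_r; lra. lra. }
      replace (v^2 * x^2 * (h^2*h^2)) with ((v^2 * x^2 * h^2) * h^2) by ring.
      apply Rmult_le_compat_r; lra. }
    pose proof (exp_pos (Rabs (v * h ^ 2 * x))).
    assert (0 <= V0^2 * x^2 * h * h^2) by (apply Rmult_le_pos; [|lra]; apply Rmult_le_pos; [|lra]; nra).
    replace (V0 ^ 2 * x ^ 2 * exp (V0 * Rabs x) * h * h ^ 2) with ((V0^2 * x^2 * h * h^2) * exp (V0 * Rabs x)) by ring.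
    apply Rmult_le_compat; try lra. apply pow2_ge_0 || nra.
  - apply (lim_eq _ (K * 0)); [|ring]. apply limit_mul. apply lim_const. apply lim_id.
Qed.

Lemma G_decomp : forall x h, h <> 0 ->
  Gf x h / h^2 = (exp (alpha_p s2 mu q * x) - exp (alpha_m s2 mu q * x)) * ((1 / disc s2 mu q - 1 / Eh h) / h^2)
     - exp (alpha_p s2 mu q * x) * ((exp ((Phi1 h - alpha_p s2 mu q) * x) - 1) / h^2) / Eh h
     + exp (alpha_m s2 mu q * x) * ((exp ((Phi2 h - alpha_m s2 mu q) * x) - 1) / h^2) / Eh h.
Proof.
  intros x h Hh. pose proof Dpos. pose proof (Eh_pos h).
  unfold Gf.
  replace (exp (Phi1 h * x)) with (exp (alpha_p s2 mu q * x) * exp ((Phi1 h - alpha_p s2 mu q) * x))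
    by (rewrite <- exp_plus; f_equal; ring).
  replace (exp (Phi2 h * x)) with (exp (alpha_m s2 mu q * x) * exp ((Phi2 h - alpha_m s2 mu q) * x))
    by (rewrite <- exp_plus; f_equal; ring).
  field. repeat split; try auto; try ((apply Rgt_not_eq; lra) || (apply Rlt_not_eq; lra)).
Qed.

Lemma G_lim : forall x, 0 <= x -> limit1_in (fun h => Gf x h / h^2) D0 (delta_limit s2 mu q x) 0.
Proof.
  intros x Hx. pose proof Dpos as HD. pose proof DD as HDD.
  set (a := alpha_p s2 mu q). set (b := alpha_m s2 mu q). set (D := disc s2 mu q).
  apply (lim_ext_near _ (fun h => (exp (a * x) - exp (b * x)) * (q^2 / (D * Eh h * (Eh h + D)))
     - exp (a * x) * ((exp ((Phi1 h - a) * x) - 1) / h^2) * / Eh h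
     + exp (b * x) * ((exp ((Phi2 h - b) * x) - 1) / h^2) * / Eh h)).
  { exists 1. split. lra. intros h Hh. rewrite G_decomp by lra. rewrite V_eq by lra. 
    unfold a, b, D. unfold Rdiv. ring. }
  assert (HE : limit1_in Eh D0 D 0) by apply Eh_lim.
  assert (HD0 : 0 < D) by exact HD.
  assert (Hinv : limit1_in (fun h => / Eh h) D0 (/ D) 0) by (apply limit_inv; auto; apply Rgt_not_eq; lra).
  apply (lim_eq _ ((exp (a * x) - exp (b * x)) * (q^2 * / (D * D * (D + D)))
     - exp (a * x) * (- theta_p s2 mu q * x) * / D + exp (b * x) * (- theta_m s2 mu q * x) * / D)).
  - apply limit_plus. apply limit_minus.
    + apply limit_mul. apply lim_const. unfold Rdiv. apply limit_mul. apply lim_const.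
      apply limit_inv. apply limit_mul. apply limit_mul. apply lim_const. exact HE.
      apply limit_plus. exact HE. apply lim_const.
      apply Rgt_not_eq. apply Rlt_gt. apply Rmult_lt_0_compat. nra. lra.
    + apply limit_mul; [|exact Hinv]. apply limit_mul. apply lim_const.
      apply X_lim. apply key1.
    + apply limit_mul; [|exact Hinv]. apply limit_mul. apply lim_const.
      apply X_lim. apply key2.
  - unfold delta_limit, W. fold a b D.
    destruct (Rlt_dec x 0) as [Hn|_]; [lra|].
    destruct (Rlt_dec 0 (Rmax q (Rabs mu))) as [_|Hn]; [|lra].
    rewrite <- HDD. change (disc s2 mu q) with D. field. split; apply Rgt_not_eq; lra.
Qed.


Lemma abs3 : forall A B C, Rabs (A - B + C) <= Rabs A + Rabs B + Rabs C.
Proof. intros. unfold Rminus. eapply Rle_trans. apply Rabs_triang.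
  pose proof (Rabs_triang A (-B)). rewrite Rabs_Ropp in H. lra. Qed.

Lemma G_id : forall x h,
  Gf x h = (exp (alpha_p s2 mu q * x) - exp (alpha_m s2 mu q * x)) * (1 / disc s2 mu q - 1 / Eh h)
     - exp (alpha_p s2 mu q * x) * (exp ((Phi1 h - alpha_p s2 mu q) * x) - 1) / Eh h
     + exp (alpha_m s2 mu q * x) * (exp ((Phi2 h - alpha_m s2 mu q) * x) - 1) / Eh h.
Proof.
  intros x h. pose proof Dpos. pose proof (Eh_pos h).
  unfold Gf.
  replace (exp (Phi1 h * x)) with (exp (alpha_p s2 mu q * x) * exp ((Phi1 h - alpha_p s2 mu q) * x))
    by (rewrite <- exp_plus; f_equal; ring).
  replace (exp (Phi2 h * x)) with (exp (alpha_m s2 mu q * x) * exp ((Phi2 h - alpha_m s2 mu q) * x))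
    by (rewrite <- exp_plus; f_equal; ring).
  field. repeat split; try ((apply Rgt_not_eq; lra) || (apply Rlt_not_eq; lra)).
Qed.

Lemma term_bound : forall C al Phi x h, 0 < h -> 0 <= x -> x * h^2 <= 1 ->
  Rabs ((Phi - al) / h^2) <= C -> exp (al * x) <= exp (alpha_p s2 mu q * x) ->
  Rabs (exp (al * x) * (exp ((Phi - al) * x) - 1) / Eh h)
    <= exp (alpha_p s2 mu q * x) * (C * exp C / disc s2 mu q) * h^2 * x.
Proof.
  intros C al Phi x h Hh Hx Hxh HC Hal.
  pose proof Dpos. pose proof (Eh_pos h). pose proof (Eh_ge h).
  assert (Hh2 : 0 < h^2) by (apply pow_lt; lra).
  set (v := (Phi - al) / h^2) in *.
  assert (Hv : Phi - al = v * h^2) by (unfold v; field; lra).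
  rewrite Hv.
  assert (HC0 : 0 <= C) by (pose proof (Rabs_pos v); lra).
  assert (Ht : Rabs (v * h^2 * x) <= C * (h^2 * x)).
  { rewrite !Rabs_mult, (Rabs_pos_eq (h^2)), (Rabs_pos_eq x) by lra.
    rewrite Rmult_assoc. apply Rmult_le_compat_r; [nra|exact HC]. }
  assert (Ht1 : Rabs (v * h^2 * x) <= C).
  { eapply Rle_trans. exact Ht. rewrite <- (Rmult_1_r C) at 2. apply Rmult_le_compat_l; lra. }
  pose proof (exp_taylor1 (v * h^2 * x)) as HT.
  assert (He : exp (Rabs (v * h^2 * x)) <= exp C).
  { destruct Ht1 as [Ht1|Ht1]; [left; apply exp_increasing; auto | rewrite Ht1; lra]. }
  assert (HT2 : Rabs (exp (v * h^2 * x) - 1) <= C * exp C * (h^2 * x)).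
  { eapply Rle_trans. exact HT. 
    replace (C * exp C * (h^2*x)) with ((C * (h^2 * x)) * exp C) by ring.
    apply Rmult_le_compat; try lra. apply Rabs_pos. left; apply exp_pos. }
  unfold Rdiv. rewrite !Rabs_mult, Rabs_inv, (Rabs_pos_eq (exp (al * x))), (Rabs_pos_eq (Eh h))
    by (try lra; left; apply exp_pos).
  assert (Hinv : / Eh h <= / disc s2 mu q) by (apply Rinv_le_contravar; lra).
  pose proof (exp_pos (al * x)). pose proof (Rabs_pos (exp (v * h ^ 2 * x) - 1)).
  assert (0 <= C * exp C * (h^2 * x)) by (pose proof (exp_pos C); apply Rmult_le_pos; nra).
  replace (exp (alpha_p s2 mu q * x) * (C * exp C * / disc s2 mu q) * h ^ 2 * x)
    with (exp (alpha_p s2 mu q * x) * (C * exp C * (h^2 * x)) * / disc s2 mu q) by ring.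
  apply Rmult_le_compat; try lra.
  - apply Rmult_le_pos; lra.
  - left; apply Rinv_0_lt_compat; lra.
  - apply Rmult_le_compat; lra.
Qed.

Lemma G_bound : exists A0 h0, 0 < A0 /\ 0 < h0 /\ h0 <= h1 /\
  forall h x, 0 < h < h0 -> 0 <= x -> x * h^2 <= 1 ->
  Rabs (Gf x h) <= A0 * h^2 * (1 + x) * exp (alpha_p s2 mu q * x).
Proof.
  destruct (lim_bound _ _ key1) as [d1 [Hd1 HB1]].
  destruct (lim_bound _ _ key2) as [d2 [Hd2 HB2]].
  set (C1 := Rabs (- theta_p s2 mu q) + 1) in *.
  set (C2 := Rabs (- theta_m s2 mu q) + 1) in *.
  pose proof Dpos as HD.
  set (D := disc s2 mu q) in *.
  assert (HDp : 0 < D) by exact HD.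
  set (K0 := q^2 / (D * D * D)).
  set (K1 := C1 * exp C1 / D). set (K2 := C2 * exp C2 / D).
  assert (HK0 : 0 <= K0) by (unfold K0; apply Rdiv_le_0_compat; [apply pow2_ge_0| apply Rmult_lt_0_compat; nra]).
  assert (HC1 : 0 <= C1) by (unfold C1; pose proof (Rabs_pos (- theta_p s2 mu q)); lra).
  assert (HC2 : 0 <= C2) by (unfold C2; pose proof (Rabs_pos (- theta_m s2 mu q)); lra).
  assert (HK1 : 0 <= K1) by (unfold K1; apply Rdiv_le_0_compat; [pose proof (exp_pos C1); nra|lra]).
  assert (HK2 : 0 <= K2) by (unfold K2; apply Rdiv_le_0_compat; [pose proof (exp_pos C2); nra|lra]).
  exists (K0 + K1 + K2 + 1), (Rmin h1 (Rmin d1 d2)).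
  pose proof h1_pos.
  split; [lra|]. split; [apply Rmin_pos; [lra| apply Rmin_pos; lra]|]. split; [apply Rmin_l|].
  intros h x Hh Hx Hxh.
  pose proof (Rmin_l h1 (Rmin d1 d2)); pose proof (Rmin_r h1 (Rmin d1 d2)).
  pose proof (Rmin_l d1 d2); pose proof (Rmin_r d1 d2).
  set (a := alpha_p s2 mu q) in *. set (b := alpha_m s2 mu q) in *.
  assert (Hab : b * x <= a * x).
  { apply Rmult_le_compat_r; auto. unfold a, b, alpha_p, alpha_m. fold D.
    apply Rmult_le_compat_r. left; apply Rinv_0_lt_compat; lra. lra. }
  assert (Heb : exp (b * x) <= exp (a * x)).
  { destruct Hab as [Hab|Hab]; [left; apply exp_increasing; auto| rewrite Hab; lra]. }
  assert (Heaa : exp (a * x) <= exp (a * x)) by lra.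
  rewrite G_id. fold a b D.
  pose proof (term_bound C1 a (Phi1 h) x h ltac:(lra) Hx Hxh (HB1 h ltac:(lra)) Heaa) as T1.
  pose proof (term_bound C2 b (Phi2 h) x h ltac:(lra) Hx Hxh (HB2 h ltac:(lra)) Heb) as T2.
  fold a D K1 in T1. fold a D K2 in T2.
  assert (T0 : Rabs ((exp (a * x) - exp (b * x)) * (1 / D - 1 / Eh h)) <= exp (a * x) * K0 * h^2).
  { pose proof (Eh_pos h) as Ep. pose proof (Eh_ge h) as Eg. fold D in Eg.
    replace (1 / D - 1 / Eh h) with (h^2 * ((1 / D - 1 / Eh h) / h^2)) by (field; repeat split; apply Rgt_not_eq; lra).
    unfold D. rewrite V_eq by (apply Rgt_not_eq; lra). fold D.
    rewrite !Rabs_mult. pose proof (exp_pos (b * x)).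
    rewrite (Rabs_pos_eq (exp (a*x) - exp (b*x))) by lra.
    rewrite (Rabs_pos_eq (h^2)) by (apply pow2_ge_0).
    rewrite (Rabs_pos_eq (q^2 / (D * Eh h * (Eh h + D)))).
    2:{ apply Rdiv_le_0_compat. apply pow2_ge_0. apply Rmult_lt_0_compat; [nra|lra]. }
    assert (q ^ 2 / (D * Eh h * (Eh h + D)) <= K0).
    { unfold K0, Rdiv. apply Rmult_le_compat_l. apply pow2_ge_0.
      apply Rinv_le_contravar. apply Rmult_lt_0_compat; [apply Rmult_lt_0_compat|]; lra.
      apply Rmult_le_compat; try nra. }
    assert (0 <= h^2) by apply pow2_ge_0.
    replace (exp (a * x) * K0 * h ^ 2) with (exp (a * x) * (K0 * h^2)) by ring.
    apply Rmult_le_compat; try lra. apply Rmult_le_pos; [lra|]. 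
    apply Rdiv_le_0_compat. apply pow2_ge_0. apply Rmult_lt_0_compat; [nra|lra].
    rewrite (Rmult_comm K0). apply Rmult_le_compat_l; lra. }
  eapply Rle_trans. apply abs3.
  assert (HP : 0 <= exp (a * x) * h^2) by (pose proof (exp_pos (a*x)); pose proof (pow2_ge_0 h); nra).
  assert (exp (a * x) * K1 * h ^ 2 * x + exp (a * x) * K2 * h ^ 2 * x
          = (exp (a * x) * h^2) * (x * (K1 + K2))) by ring.
  assert (exp (a * x) * K0 * h ^ 2 = (exp (a * x) * h^2) * K0) by ring.
  assert ((K0 + K1 + K2 + 1) * h ^ 2 * (1 + x) * exp (a * x)
          = (exp (a * x) * h^2) * (K0 + K1 + K2 + 1) + (exp (a * x) * h^2) * (x * (K0 + K1 + K2 + 1))) by ring.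
  assert ((exp (a * x) * h^2) * K0 <= (exp (a * x) * h^2) * (K0 + K1 + K2 + 1)) by (apply Rmult_le_compat_l; lra).
  assert ((exp (a * x) * h^2) * (x * (K1 + K2)) <= (exp (a * x) * h^2) * (x * (K0 + K1 + K2 + 1))).
  { apply Rmult_le_compat_l; [lra|]. apply Rmult_le_compat_l; lra. }
  lra.
Qed.

End Analytic.

Fixpoint sumk (f : nat -> R) (n : nat) : R :=
  match n with 0%nat => 0 | S m => sumk f m + f m end.

Lemma sumk_S : forall f n, sumk f (S n) = sumk f n + f n.
Proof. reflexivity. Qed.

Lemma sumk_nonneg : forall f N, (forall k, 0 <= f k) -> 0 <= sumk f N.
Proof. intros f N Hf. induction N; simpl. lra. pose proof (Hf N). lra. Qed.

Lemma sumk_le_term : forall f N j, (j < N)%nat -> (forall k, 0 <= f k) -> f j <= sumk f N.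
Proof.
  intros f N. induction N; intros j Hj Hf. lia.
  simpl. destruct (Nat.eq_dec j N). subst. pose proof (sumk_nonneg f N Hf). lra.
  pose proof (IHN j ltac:(lia) Hf). pose proof (Hf N). lra.
Qed.

Lemma sumk_zero : forall f m, (forall j, (j < m)%nat -> f j = 0) -> sumk f m = 0.
Proof. intros f m. induction m; intros H; simpl. lra. rewrite IHm. rewrite H by lia. lra. intros; apply H; lia. Qed.

Lemma series_zero : forall (e : nat -> R) z0, 0 < z0 ->
  (forall z, 0 < z < z0 -> Un_cv (fun n => sumk (fun k => e k * z^k) n) 0) ->
  forall k, e k = 0.
Proof.
  intros e z0 Hz0 H.
  set (z1 := z0 / 2).
  assert (Hz1 : 0 < z1 < z0) by (unfold z1; lra).
  destruct (H z1 Hz1 1 Rlt_0_1) as [N HN].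
  set (M := 2 + sumk (fun k => Rabs (e k * z1^k)) N).
  assert (HM0 : 0 <= M).
  { unfold M. pose proof (sumk_nonneg (fun k => Rabs (e k * z1^k)) N (fun k => Rabs_pos _)). lra. }
  assert (HM : forall k, Rabs (e k * z1^k) <= M).
  { intros k. destruct (Nat.lt_ge_cases k N) as [Hk|Hk].
    - pose proof (sumk_le_term (fun k => Rabs (e k * z1^k)) N k Hk (fun k => Rabs_pos _)).
      unfold M; simpl in *; lra.
    - pose proof (HN k Hk) as A. pose proof (HN (S k) ltac:(lia)) as B.
      unfold R_dist in A, B. rewrite Rminus_0_r in A, B. simpl in B.
      pose proof (sumk_nonneg (fun k => Rabs (e k * z1^k)) N (fun k => Rabs_pos _)).
      replace (e k * z1^k) with ((sumk (fun k => e k * z1^k) k + e k * z1^k) - sumk (fun k => e k * z1^k) k) by ring.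
      pose proof (Rabs_triang (sumk (fun k => e k * z1 ^ k) k + e k * z1 ^ k) (- sumk (fun k => e k * z1 ^ k) k)).
      rewrite Rabs_Ropp in H1. unfold Rminus. unfold M. lra. }
  intros k. induction k as [m IH] using Wf_nat.lt_wf_ind.
  assert (Hbound : forall z, 0 < z <= z1 / 2 -> Rabs (e m * z^m) <= 2 * M * (z / z1)^(S m)).
  { intros z Hz. set (rho := z / z1).
    assert (Hrho : 0 < rho <= 1/2) by (unfold rho; split; [apply Rdiv_lt_0_compat; lra|];
      apply (Rmult_le_reg_r z1); [lra|]; unfold Rdiv; rewrite Rmult_assoc, Rinv_l; lra).
    assert (Hzk : forall k, z^k = z1^k * rho^k).
    { intros k. rewrite <- Rpow_mult_distr. f_equal. unfold rho. field. lra. }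
    set (Sz := fun n => sumk (fun k => e k * z^k) n).
    assert (HSm : Sz m = 0).
    { unfold Sz. apply sumk_zero. intros j Hj. rewrite IH by auto. ring. }
    assert (Htail : forall j, Rabs (Sz (S m + j)%nat - e m * z^m) <= 2 * M * rho^(S m) * (1 - (1/2)^j)).
    { induction j.
      - rewrite Nat.add_0_r. unfold Sz. simpl sumk. fold (Sz m). rewrite HSm.
        replace (0 + e m * z ^ m - e m * z ^ m) with 0 by ring. rewrite Rabs_R0. simpl. lra.
      - replace (S m + S j)%nat with (S (S m + j)) by lia.
        unfold Sz at 1. rewrite sumk_S. fold (Sz (S m + j)%nat).
        replace (Sz (S m + j)%nat + e (S m + j)%nat * z ^ (S m + j) - e m * z ^ m)
          with ((Sz (S m + j)%nat - e m * z ^ m) + e (S m + j)%nat * z ^ (S m + j)) by ring.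
        eapply Rle_trans. apply Rabs_triang.
        assert (Ht : Rabs (e (S m + j)%nat * z ^ (S m + j)) <= M * (rho^(S m) * (1/2)^j)).
        { rewrite Hzk, <- Rmult_assoc, Rabs_mult, (Rabs_pos_eq (rho ^ _)) by (apply pow_le; lra).
          apply Rmult_le_compat. apply Rabs_pos. apply pow_le; lra. apply HM.
          rewrite pow_add. apply Rmult_le_compat_l. apply pow_le; lra. apply pow_incr; lra. }
        assert (E : 2 * M * rho ^ S m * (1 - (1 / 2) ^ S j) = 2 * M * rho ^ S m * (1 - (1 / 2) ^ j) + M * (rho ^ S m * (1 / 2) ^ j)).
        { simpl. field. }
        rewrite E. apply Rplus_le_compat; [exact IHj| exact Ht]. }
    apply Rnot_lt_le. intro Hc.
    set (eps := Rabs (e m * z^m) - 2 * M * rho^(S m)).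
    destruct (H z ltac:(lra) eps ltac:(unfold eps; lra)) as [N2 HN2].
    specialize (HN2 (S m + N2)%nat ltac:(lia)). specialize (Htail N2).
    fold (Sz (S m + N2)%nat) in HN2. unfold R_dist in HN2. rewrite Rminus_0_r in HN2.
    assert (0 <= (1/2)^N2) by (apply pow_le; lra).
    assert (2 * M * rho ^ S m * (1 - (1 / 2) ^ N2) <= 2 * M * rho ^ S m).
    { assert (0 <= 2 * M * rho^(S m)) by (pose proof (pow_le rho (S m)); nra). nra. }
    pose proof (Rabs_triang (Sz (S m + N2)%nat - e m * z ^ m) (- Sz (S m + N2)%nat)) as Tr.
    rewrite Rabs_Ropp in Tr. replace (Sz (S m + N2)%nat - e m * z ^ m + - Sz (S m + N2)%nat) with (- (e m * z^m)) in Tr by ring.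
    rewrite Rabs_Ropp in Tr. unfold eps in HN2. lra. }
  assert (Hb2 : forall z, 0 < z <= z1 / 2 -> Rabs (e m) * z1^(S m) <= 2 * M * z).
  { intros z Hz. specialize (Hbound z Hz).
    rewrite Rabs_mult, (Rabs_pos_eq (z^m)) in Hbound by (apply pow_le; lra).
    assert (Hz1m : 0 < z1^(S m)) by (apply pow_lt; lra).
    assert (Hzm : 0 < z^m) by (apply pow_lt; lra).
    assert (Hp : (z/z1)^(S m) * z1^(S m) = z * z^m).
    { rewrite <- Rpow_mult_distr. replace (z / z1 * z1) with z by (field; lra). reflexivity. }
    apply (Rmult_le_compat_r (z1^(S m))) in Hbound; [|lra].
    rewrite (Rmult_assoc (2*M)), Hp in Hbound.
    apply (Rmult_le_reg_r (z^m)); [lra|]. lra. }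
  destruct (Req_dec (e m) 0) as [|Hne]; [auto|exfalso].
  assert (HA : 0 < Rabs (e m) * z1^(S m)) by (apply Rmult_lt_0_compat; [apply Rabs_pos_lt; auto| apply pow_lt; lra]).
  set (A := Rabs (e m) * z1^(S m)) in *.
  set (z := Rmin (z1/2) (A / (2 * (2 * M + 1)))).
  assert (Hzp : 0 < z) by (unfold z; apply Rmin_pos; [lra| apply Rdiv_lt_0_compat; lra]).
  specialize (Hb2 z ltac:(split; [lra| apply Rmin_l])).
  assert (z <= A / (2 * (2 * M + 1))) by apply Rmin_r.
  assert (2 * M * z <= 2 * M * (A / (2 * (2 * M + 1)))) by (apply Rmult_le_compat_l; lra).
  assert (2 * M * (A / (2 * (2 * M + 1))) < A).
  { apply (Rmult_lt_reg_r (2 * (2 * M + 1))). lra. field_simplify; try lra. nra. }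
  lra.
Qed.

Lemma seg_int : forall (g : R -> R) c b A B, 0 < b -> A < B ->
  (forall x, A < x < B -> g x = c * exp (- (b * x))) ->
  ex_RInt g A B /\ RInt g A B = c * (exp (- (b * A)) - exp (- (b * B))) / b.
Proof.
  intros g c b A B Hb HAB Hg.
  set (F := fun x => - c * exp (- (b * x)) / b).
  assert (HI : is_RInt (fun x => c * exp (- (b * x))) A B (minus (F B) (F A))).
  { apply (is_RInt_derive (V := R_CompleteNormedModule) F (fun x => c * exp (- (b * x)))).
    - intros x _. unfold F. auto_derive. auto. field. lra.
    - intros x _. apply continuity_pt_filterlim. 
      apply derivable_continuous_pt. reg. }
  assert (Hext : forall x, Rmin A B < x < Rmax A B -> c * exp (- (b * x)) = g x).
  { intros x Hx. rewrite Rmin_left, Rmax_right in Hx by lra. symmetry. apply Hg. exact Hx. }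
  split.
  - eapply ex_RInt_ext. exact Hext. eexists. exact HI.
  - rewrite <- (RInt_ext _ _ _ _ Hext). rewrite (is_RInt_unique _ _ _ _ HI).
    unfold F, minus, plus, opp. simpl. field. lra.
Qed.

Lemma nat_above : forall r, exists N : nat, r < INR N.
Proof.
  intros r. destruct (archimed r) as [H1 H2].
  exists (Z.to_nat (up r)). destruct (Z_le_gt_dec 0 (up r)).
  - rewrite INR_IZR_INZ, Z2Nat.id by lia. lra.
  - replace (Z.to_nat (up r)) with 0%nat by lia. assert (IZR (up r) < IZR 0) by (apply IZR_lt; lia). simpl in *. lra.
Qed.

Lemma exp_INR_pow : forall k t, exp (INR k * t) = exp t ^ k.
Proof.
  induction k; intros t. simpl. rewrite Rmult_0_l, exp_0. reflexivity.
  rewrite S_INR. replace ((INR k + 1) * t) with (INR k * t + t) by ring.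
  rewrite exp_plus, IHk. simpl. ring.
Qed.

Lemma cv_shift2 : forall u l, Un_cv (fun n => u (S (S n))) l -> Un_cv u l.
Proof.
  intros u l H eps He. destruct (H eps He) as [N HN]. exists (S (S N)).
  intros n Hn. destruct n as [|[|n]]; try lia. apply HN. lia.
Qed.

Section Discrete.
Variables (s2 mu q h : R) (Wh : R -> R) (w : nat -> R).
Hypothesis Hs2 : 0 < s2.
Hypothesis Hq : 0 <= q.
Hypothesis Hh : 0 < h.
Definition lp := s2 / (2 * h^2) + mu / (2 * h).
Definition lm := s2 / (2 * h^2) - mu / (2 * h).
Hypothesis Hlp : 0 < lp.
Hypothesis Hlm : 0 <= lm.
Hypothesis Hstep : forall k x, INR k * h <= x < (INR k + 1) * h -> Wh x = w k.
Hypothesis HL : forall b, above_Phih s2 mu h q b ->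
  laplace_is Wh b ((exp (b * h) - 1) / (b * h * (psih s2 mu h b - q))).

Definition Pz z := lp - (lp + lm + q) * z + lm * z^2.

Lemma psih_lp : forall b, psih s2 mu h b = lp * (exp (b*h) - 1) + lm * (exp (- (b*h)) - 1).
Proof. intros b. unfold psih, lp, lm. field. lra. Qed.

Lemma int_partial : forall b, 0 < b -> forall n,
  ex_RInt (fun x => exp (- (b * x)) * Wh x) 0 (INR n * h) /\
  RInt (fun x => exp (- (b * x)) * Wh x) 0 (INR n * h)
   = sumk (fun k => w k * (exp (- (b * (INR k * h))) - exp (- (b * (INR k * h + h)))) / b) n.
Proof.
  intros b Hb. induction n.
  - simpl. rewrite Rmult_0_l. split. apply ex_RInt_point. rewrite RInt_point. reflexivity.
  - destruct IHn as [IH1 IH2].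
    destruct (seg_int (fun x => exp (- (b * x)) * Wh x) (w n) b (INR n * h) (INR n * h + h) Hb ltac:(lra))
      as [S1 S2].
    { intros x Hx. rewrite (Hstep n x) by lra. ring. }
    replace (INR (S n) * h) with (INR n * h + h) by (rewrite S_INR; ring).
    split. eapply ex_RInt_Chasles; eauto.
    rewrite <- (RInt_Chasles _ _ _ _ IH1 S1). rewrite sumk_S, <- IH2, S2. reflexivity.
Qed.

Lemma sumk_factor : forall (f : nat -> R) c n, sumk (fun k => f k * c) n = sumk f n * c.
Proof. intros f c n. induction n; simpl. ring. rewrite IHn. ring. Qed.

Lemma series_cv : forall b, above_Phih s2 mu h q b ->
  Un_cv (fun n => sumk (fun k => w k * (exp (- (b * h)))^k) n) (1 / (h * Pz (exp (- (b * h))))).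
Proof.
  intros b Hab. destruct (HL b Hab) as [Hint Hlim].
  destruct Hab as [Hb Hroot].
  set (z := exp (- (b * h))).
  assert (Hz0 : 0 < z) by apply exp_pos.
  assert (Hz1 : z < 1) by (unfold z; rewrite <- exp_0; apply exp_increasing; nra).
  assert (Hpsi : psih s2 mu h b - q <> 0).
  { intro E. assert (b < b) by (apply Hroot; lra). lra. }
  set (L := (exp (b * h) - 1) / (b * h * (psih s2 mu h b - q))).
  assert (HLv : L * (b / (1 - z)) = 1 / (h * Pz z)).
  { unfold L. rewrite psih_lp in *. unfold Pz. fold z.
    replace (exp (b * h)) with (/ z) by (unfold z; rewrite exp_Ropp, Rinv_inv; reflexivity).
    fold z in Hpsi. 
    replace (exp (b * h)) with (/ z) in Hpsi by (unfold z; rewrite exp_Ropp, Rinv_inv; reflexivity).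
    assert (lp * (/ z - 1) + lm * (z - 1) - q = (lp - (lp + lm + q) * z + lm * z ^ 2) / z) by (field; lra).
    rewrite H in *. 
    assert (lp - (lp + lm + q) * z + lm * z ^ 2 <> 0).
    { intro E. apply Hpsi. rewrite E. unfold Rdiv. ring. }
    field. repeat split; try lra; auto. }
  rewrite <- HLv.
  intros eps He.
  set (eps' := eps * ((1 - z) / b)).
  assert (He' : 0 < eps') by (unfold eps'; apply Rmult_lt_0_compat; [lra|apply Rdiv_lt_0_compat; lra]).
  destruct (Hlim eps' He') as [M HM].
  destruct (nat_above (M / h)) as [N HN].
  exists N. intros n Hn.
  assert (HT : M <= INR n * h).
  { apply le_INR in Hn. apply (Rmult_lt_compat_r h) in HN; [|lra].
    unfold Rdiv in HN. rewrite Rmult_assoc, Rinv_l, Rmult_1_r in HN by lra. nra. }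
  assert (HT0 : 0 <= INR n * h) by (pose proof (pos_INR n); nra).
  destruct (Hint _ HT0) as [pr].
  specialize (HM _ pr HT).
  rewrite <- RInt_Reals in HM. destruct (int_partial b Hb n) as [_ Hr]. rewrite Hr in HM.
  assert (Hsum : sumk (fun k => w k * (exp (- (b * (INR k * h))) - exp (- (b * (INR k * h + h)))) / b) n
       = sumk (fun k => w k * z ^ k) n * ((1 - z) / b)).
  { rewrite <- sumk_factor. apply f_equal2; [|reflexivity]. apply functional_extensionality. intros k.
    replace (- (b * (INR k * h))) with (INR k * (- (b * h))) by ring.
    replace (- (b * (INR k * h + h))) with (INR k * (- (b * h)) + (- (b * h))) by ring.
    rewrite exp_plus, exp_INR_pow. fold z. field. lra. }
  rewrite Hsum in HM. unfold R_dist.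
  replace (sumk (fun k => w k * z ^ k) n - L * (b / (1 - z)))
    with ((sumk (fun k => w k * z ^ k) n * ((1 - z) / b) - L) * (b / (1 - z))) by (field; lra).
  rewrite Rabs_mult, (Rabs_pos_eq (b / (1 - z))) by (left; apply Rdiv_lt_0_compat; lra).
  apply (Rmult_lt_reg_r ((1 - z) / b)). apply Rdiv_lt_0_compat; lra.
  replace (Rabs (sumk (fun k : nat => w k * z ^ k) n * ((1 - z) / b) - L) * (b / (1 - z)) * ((1 - z) / b))
    with (Rabs (sumk (fun k : nat => w k * z ^ k) n * ((1 - z) / b) - L)) by (field; lra).
  exact HM.
Qed.


Lemma Pz_nz : forall b, above_Phih s2 mu h q b -> Pz (exp (- (b * h))) <> 0.
Proof.
  intros b [Hb Hroot]. set (z := exp (- (b * h))).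
  assert (Hz0 : 0 < z) by apply exp_pos.
  assert (Hpsi : psih s2 mu h b - q <> 0).
  { intro E. assert (b < b) by (apply Hroot; lra). lra. }
  rewrite psih_lp in Hpsi.
  replace (exp (b * h)) with (/ z) in Hpsi by (unfold z; rewrite exp_Ropp, Rinv_inv; reflexivity).
  fold z in Hpsi. intro E. apply Hpsi. unfold Pz in E.
  apply (Rmult_eq_reg_l z); [|lra]. rewrite Rmult_0_r. rewrite <- E. field. lra.
Qed.

Lemma region : exists z0, 0 < z0 /\ forall z, 0 < z < z0 ->
  above_Phih s2 mu h q (- ln z / h) /\ exp (- ((- ln z / h) * h)) = z.
Proof.
  set (K := (q + lm) / lp).
  assert (HK : 0 <= K) by (unfold K; apply Rdiv_le_0_compat; lra).
  set (b0 := ln (1 + K) / h + 1).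
  assert (Hln : 0 <= ln (1 + K)).
  { apply Rnot_lt_le. intro Hc. apply exp_increasing in Hc. rewrite exp_0, exp_ln in Hc by lra. lra. }
  assert (Hb0 : 0 < b0) by (unfold b0; pose proof (Rdiv_le_0_compat _ h Hln Hh); lra).
  exists (exp (- (b0 * h))). split. apply exp_pos.
  intros z Hz.
  assert (Hez : exp (- ((- ln z / h) * h)) = z).
  { replace (- ((- ln z / h) * h)) with (ln z) by (field; lra). apply exp_ln; lra. }
  split; [|exact Hez].
  assert (Hbz : b0 < - ln z / h).
  { assert (ln z < - (b0 * h)).
    { rewrite <- (ln_exp (- (b0 * h))). apply ln_increasing; lra. }
    apply (Rmult_lt_reg_r h); [lra|]. unfold Rdiv. rewrite Rmult_assoc, Rinv_l by lra. lra. }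
  split. lra.
  intros r Hr Hpr. rewrite psih_lp in Hpr.
  pose proof (exp_pos (- (r * h))).
  assert (lm * (exp (- (r * h)) - 1) >= - lm) by nra.
  assert (Hle : exp (r * h) <= 1 + K).
  { unfold K. apply (Rmult_le_reg_l lp); [lra|]. field_simplify; [|lra]. nra. }
  assert (r * h < ln (1 + K) + h).
  { apply Rnot_le_lt. intro Hc.
    assert (exp (ln (1 + K)) < exp (r * h)).
    { apply exp_increasing. lra. }
    rewrite exp_ln in H1 by lra. lra. }
  assert (r < b0).
  { unfold b0. apply (Rmult_lt_reg_r h); [lra|]. unfold Rdiv.
    replace ((ln (1 + K) * / h + 1) * h) with (ln (1 + K) + h) by (field; lra). lra. }
  lra.
Qed.

Definition sP := lp + lm + q.

Definition ecoef (k : nat) : R :=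
  match k with
  | 0%nat => lp * w 0 - 1 / h
  | 1%nat => lp * w 1 - sP * w 0
  | S (S j as k1) => lp * w (S k1) - sP * w k1 + lm * w j
  end.

Lemma ecoef_sum : forall z n,
  sumk (fun k => ecoef k * z^k) (S (S n)) =
  lp * sumk (fun k => w k * z^k) (S (S n)) - sP * z * sumk (fun k => w k * z^k) (S n)
  + lm * z^2 * sumk (fun k => w k * z^k) n - 1 / h.
Proof.
  intros z n. induction n.
  - simpl. ring.
  - rewrite (sumk_S _ (S (S n))), IHn.
    rewrite (sumk_S _ (S (S n))), (sumk_S _ (S n)), (sumk_S _ n).
    simpl ecoef. simpl pow. ring.
Qed.

Lemma cv_const : forall c, Un_cv (fun _ => c) c.
Proof. intros c eps He. exists 0%nat. intros. unfold R_dist. rewrite Rminus_eq_0, Rabs_R0. lra. Qed.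

Lemma cv_shift1 : forall u l, Un_cv u l -> Un_cv (fun n => u (S n)) l.
Proof. intros u l H eps He. destruct (H eps He) as [N HN]. exists N. intros. apply HN. lia. Qed.

Lemma ecoef_zero : forall k, ecoef k = 0.
Proof.
  destruct region as [z0 [Hz0 Hreg]].
  apply (series_zero ecoef z0 Hz0).
  intros z Hz. destruct (Hreg z Hz) as [Hab Hez].
  pose proof (series_cv _ Hab) as Hcv. pose proof (Pz_nz _ Hab) as Hnz.
  rewrite Hez in Hcv, Hnz.
  set (l := 1 / (h * Pz z)) in *.
  apply cv_shift2.
  apply (Un_cv_ext (fun n => lp * sumk (fun k => w k * z^k) (S (S n)) - sP * z * sumk (fun k => w k * z^k) (S n)
  + lm * z^2 * sumk (fun k => w k * z^k) n - 1 / h)).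
  { intros n. rewrite ecoef_sum. reflexivity. }
  replace 0 with (lp * l - sP * z * l + lm * z^2 * l - 1 / h).
  2:{ unfold l, Pz, sP in *. field. split; [lra|exact Hnz]. }
  apply CV_minus; [|apply cv_const].
  apply CV_plus; [apply CV_minus|].
  - apply CV_mult. apply cv_const. apply (cv_shift1 (fun n => sumk (fun k => w k * z^k) (S n))). apply (cv_shift1 (fun n => sumk (fun k => w k * z^k) n)). exact Hcv.
  - apply CV_mult. apply cv_const. apply (cv_shift1 (fun n => sumk (fun k => w k * z^k) n)). exact Hcv.
  - apply CV_mult. apply cv_const. exact Hcv.
Qed.

Lemma w_unique : forall u : nat -> R,
  u 0%nat = 1 / (h * lp) -> lp * u 1%nat = sP * u 0%nat ->
  (forall k, lp * u (S (S k)) = sP * u (S k) - lm * u k) ->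
  forall k, w k = u k.
Proof.
  intros u H0 H1 H2.
  assert (E0 : w 0%nat = u 0%nat).
  { pose proof (ecoef_zero 0). simpl in H. rewrite H0.
    apply (Rmult_eq_reg_l lp); [|lra]. replace (lp * (1 / (h * lp))) with (1 / h) by (field; lra). lra. }
  assert (E1 : w 1%nat = u 1%nat).
  { pose proof (ecoef_zero 1). simpl in H. apply (Rmult_eq_reg_l lp); [|lra]. rewrite H1, <- E0. lra. }
  assert (forall k, w k = u k /\ w (S k) = u (S k)).
  { induction k. split; auto. destruct IHk as [A B]. split; auto.
    pose proof (ecoef_zero (S (S k))). simpl in H. apply (Rmult_eq_reg_l lp); [|lra].
    rewrite H2, <- A, <- B. lra. }
  intros k. apply H.
Qed.

End Discrete.

Lemma lp_pos : forall s2 mu hstar h, hstar_ok s2 mu hstar -> 0 < s2 -> 0 < h < hstar ->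
  0 < lp s2 mu h.
Proof.
  intros s2 mu hstar h Hok Hs2 Hh. unfold lp.
  destruct (Hok h Hh) as [A _].
  destruct (Hok ((h + hstar)/2) ltac:(lra)) as [B _].
  assert (E1 : s2 / (2 * h^2) + mu / (2*h) = (s2 + mu * h) / (2 * h^2)) by (field; lra).
  set (h' := (h + hstar)/2) in *.
  assert (E2 : s2 / (2 * h'^2) + mu / (2*h') = (s2 + mu * h') / (2 * h'^2)) by (field; unfold h'; lra).
  rewrite E1 in *. rewrite E2 in B.
  assert (0 < 2 * h^2) by (pose proof (pow_lt h 2); nra).
  assert (0 < 2 * h'^2) by (pose proof (pow_lt h' 2 ltac:(unfold h'; lra)); nra).
  apply Rdiv_lt_0_compat; [|lra].
  assert (0 <= s2 + mu * h) by (apply (Rmult_le_reg_r (/ (2 * h^2))); [apply Rinv_0_lt_compat; lra|]; lra).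
  assert (0 <= s2 + mu * h') by (apply (Rmult_le_reg_r (/ (2 * h'^2))); [apply Rinv_0_lt_compat; lra|]; lra).
  destruct (Rle_lt_dec mu 0).
  - destruct H1 as [H1|H1]; auto.
    assert (mu < 0) by (destruct r; auto; subst; lra).
    unfold h' in H2. nra.
  - nra.
Qed.

Lemma Wh_at : forall s2 mu q h (Wh : R -> R) (u : nat -> R), 0 < s2 -> 0 <= q -> 0 < h ->
  0 < lp s2 mu h -> 0 <= lm s2 mu h -> is_Wh s2 mu q h Wh ->
  u 0%nat = 1 / (h * lp s2 mu h) -> lp s2 mu h * u 1%nat = sP s2 mu q h * u 0%nat ->
  (forall k, lp s2 mu h * u (S (S k)) = sP s2 mu q h * u (S k) - lm s2 mu h * u k) ->
  forall k, Wh (INR (S k) * h - h) = u k.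
Proof.
  intros s2 mu q h Wh u Hs2 Hq Hh Hlp Hlm [_ [[w Hstep] [_ HL]]] H0 H1 H2 k.
  rewrite <- (w_unique s2 mu q h Wh w Hq Hh Hlp Hlm Hstep HL u H0 H1 H2 k).
  apply Hstep. rewrite S_INR. split; nra.
Qed.

Section Case2.
Variables s2 mu q : R.
Hypothesis Hs2 : 0 < s2.
Hypothesis Hq : 0 <= q.
Hypothesis Hpos : 0 < Rmax q (Rabs mu).

Lemma char_eq : forall h N, 0 < h -> 0 < Mh s2 mu h ->
  N^2 - 2*(s2+q*h^2)*N + (s2^2 - mu^2*h^2) = 0 ->
  lp s2 mu h * (N / Mh s2 mu h)^2 - sP s2 mu q h * (N / Mh s2 mu h) + lm s2 mu h = 0.
Proof.
  intros h N Hh HM Hpoly.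
  replace (lp s2 mu h * (N / Mh s2 mu h)^2 - sP s2 mu q h * (N / Mh s2 mu h) + lm s2 mu h)
    with ((N^2 - 2*(s2+q*h^2)*N + (s2^2 - mu^2*h^2)) / (2 * h^2 * Mh s2 mu h)).
  rewrite Hpoly. unfold Rdiv. ring.
  unfold sP, lp, lm, Mh in *. field. split; lra.
Qed.

Lemma poly_N1 : forall h, (N1 s2 mu q h)^2 - 2*(s2+q*h^2)*(N1 s2 mu q h) + (s2^2 - mu^2*h^2) = 0.
Proof.
  intros h. pose proof (Eh2 s2 mu q Hs2 Hq Hpos h) as HE. unfold N1.
  match goal with |- ?L = 0 => replace L with (h^2 * (Eh s2 mu q h * Eh s2 mu q h - (mu^2 + 2*s2*q + q^2*h^2))) by ring end.
  rewrite HE. ring.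
Qed.

Lemma poly_N2 : forall h, (N2 s2 mu q h)^2 - 2*(s2+q*h^2)*(N2 s2 mu q h) + (s2^2 - mu^2*h^2) = 0.
Proof.
  intros h. pose proof (Eh2 s2 mu q Hs2 Hq Hpos h) as HE. unfold N2.
  match goal with |- ?L = 0 => replace L with (h^2 * (Eh s2 mu q h * Eh s2 mu q h - (mu^2 + 2*s2*q + q^2*h^2))) by ring end.
  rewrite HE. ring.
Qed.

Lemma DeltaW_Gf : forall h (Wh : R -> R) k, 0 < h < h1 s2 mu q ->
  0 < lp s2 mu h -> 0 <= lm s2 mu h -> is_Wh s2 mu q h Wh ->
  DeltaW s2 mu q Wh (INR (S k) * h) h = Gf s2 mu q (INR (S k) * h) h.
Proof.
  intros h Wh k Hh Hlp Hlm HW.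
  destruct (small_facts s2 mu q Hs2 Hq Hpos h Hh) as [Hh1 [HM [HN2 HN1]]].
  pose proof (Eh_pos s2 mu q Hs2 Hq Hpos h) as HE.
  set (M := Mh s2 mu h) in *. set (E := Eh s2 mu q h) in *.
  set (r1 := N1 s2 mu q h / M). set (r2 := N2 s2 mu q h / M).
  assert (C1 : lp s2 mu h * r1^2 = sP s2 mu q h * r1 - lm s2 mu h).
  { pose proof (char_eq h (N1 s2 mu q h) ltac:(lra) HM (poly_N1 h)). fold M r1 in H. lra. }
  assert (C2 : lp s2 mu h * r2^2 = sP s2 mu q h * r2 - lm s2 mu h).
  { pose proof (char_eq h (N2 s2 mu q h) ltac:(lra) HM (poly_N2 h)). fold M r2 in H. lra. }
  set (u := fun j : nat => (r1^(S j) - r2^(S j)) / E).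
  assert (U0 : u 0%nat = 1 / (h * lp s2 mu h)).
  { unfold u, r1, r2, N1, N2, lp. fold E. unfold M, Mh in *. simpl. field. repeat split; lra. }
  assert (U1 : lp s2 mu h * u 1%nat = sP s2 mu q h * u 0%nat).
  { unfold u. simpl. replace (r1 * (r1 * 1)) with (r1^2) by ring. replace (r2 * (r2 * 1)) with (r2^2) by ring.
    unfold Rdiv. rewrite <- Rmult_assoc, Rmult_minus_distr_l, C1, C2. field. lra. }
  assert (U2 : forall j, lp s2 mu h * u (S (S j)) = sP s2 mu q h * u (S j) - lm s2 mu h * u j).
  { intros j. unfold u.
    replace (r1 ^ S (S (S j))) with (r1^(S j) * r1^2) by (simpl; ring).
    replace (r2 ^ S (S (S j))) with (r2^(S j) * r2^2) by (simpl; ring).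
    replace (r1 ^ S (S j)) with (r1^(S j) * r1) by (simpl; ring).
    replace (r2 ^ S (S j)) with (r2^(S j) * r2) by (simpl; ring).
    replace (lp s2 mu h * ((r1 ^ S j * r1 ^ 2 - r2 ^ S j * r2 ^ 2) / E))
      with ((r1 ^ S j * (lp s2 mu h * r1 ^ 2) - r2 ^ S j * (lp s2 mu h * r2 ^ 2)) / E) by (field; lra).
    rewrite C1, C2. field. lra. }
  pose proof (Wh_at s2 mu q h Wh u Hs2 Hq ltac:(lra) Hlp Hlm HW U0 U1 U2 k) as HWk.
  unfold DeltaW. rewrite HWk.
  unfold W. destruct (Rlt_dec (INR (S k) * h) 0) as [Hn|_].
  { pose proof (pos_INR (S k)). nra. }
  destruct (Rlt_dec 0 (Rmax q (Rabs mu))) as [_|Hn]; [|lra].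
  unfold Gf, u. f_equal. f_equal. fold E. f_equal.
  - unfold Phi1. replace (ln (N1 s2 mu q h / Mh s2 mu h) / h * (INR (S k) * h)) with (INR (S k) * ln r1)
      by (unfold r1, M; field; lra).
    rewrite exp_INR_pow, exp_ln. reflexivity. unfold r1. apply Rdiv_lt_0_compat; lra.
  - unfold Phi2. replace (ln (N2 s2 mu q h / Mh s2 mu h) / h * (INR (S k) * h)) with (INR (S k) * ln r2)
      by (unfold r2, M; field; lra).
    rewrite exp_INR_pow, exp_ln. reflexivity. unfold r2. apply Rdiv_lt_0_compat; lra.
Qed.

End Case2.

Lemma DeltaW_case1 : forall s2 h (Wh : R -> R) k, 0 < s2 -> 0 < h ->
  0 < lp s2 0 h -> 0 <= lm s2 0 h -> is_Wh s2 0 0 h Wh ->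
  DeltaW s2 0 0 Wh (INR (S k) * h) h = 0.
Proof.
  intros s2 h Wh k Hs2 Hh Hlp Hlm HW.
  set (u := fun j : nat => 2 * h * (INR j + 1) / s2).
  assert (U0 : u 0%nat = 1 / (h * lp s2 0 h)).
  { unfold u, lp. simpl. field. lra. }
  assert (U1 : lp s2 0 h * u 1%nat = sP s2 0 0 h * u 0%nat).
  { unfold u, sP, lp, lm. simpl. field. lra. }
  assert (U2 : forall j, lp s2 0 h * u (S (S j)) = sP s2 0 0 h * u (S j) - lm s2 0 h * u j).
  { intros j. unfold u, sP, lp, lm. rewrite !S_INR. field. lra. }
  pose proof (Wh_at s2 0 0 h Wh u Hs2 ltac:(lra) Hh Hlp Hlm HW U0 U1 U2 k) as HWk.
  unfold DeltaW. rewrite HWk. unfold W.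
  destruct (Rlt_dec (INR (S k) * h) 0) as [Hn|_].
  { pose proof (pos_INR (S k)). nra. }
  rewrite Rabs_R0, Rmax_left by lra.
  destruct (Rlt_dec 0 0) as [Hn|_]; [lra|].
  unfold u. rewrite S_INR. field. lra.
Qed.

Lemma q0_identity : forall s2 mu x, 0 < s2 -> 0 < Rmax 0 (Rabs mu) ->
  delta_limit s2 mu 0 x = - (2 / 3) * (mu ^ 2 * x / s2 ^ 3) * exp (- (2 * mu * x / s2)).
Proof.
  intros s2 mu x Hs2 Hpos.
  assert (Hmu : mu <> 0).
  { intro E. subst. rewrite Rabs_R0, Rmax_left in Hpos; lra. }
  assert (HD : disc s2 mu 0 = Rabs mu).
  { unfold disc. rewrite <- sqrt_Rsqr_abs. f_equal. unfold Rsqr. ring. }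
  unfold delta_limit, theta_p, theta_m, alpha_p, alpha_m. rewrite HD.
  destruct (Rcase_abs mu) as [Hn|Hp].
  - rewrite Rabs_left by lra.
    replace ((- mu + - mu) / s2 * x) with (- (2 * mu * x / s2)) by (field; lra).
    replace ((- mu - - mu) / s2 * x) with 0 by (field; lra). rewrite exp_0.
    field. lra.
  - rewrite Rabs_right by lra.
    replace ((- mu - mu) / s2 * x) with (- (2 * mu * x / s2)) by (field; lra).
    replace ((- mu + mu) / s2 * x) with 0 by (field; lra). rewrite exp_0.
    field. lra.
Qed.

Lemma Un_cv_ev : forall (u v : nat -> R) l, (exists N, forall n, (n >= N)%nat -> u n = v n) ->
  Un_cv v l -> Un_cv u l.
Proof.
  intros u v l [N HN] Hv eps He. destruct (Hv eps He) as [N2 HN2].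
  exists (max N N2). intros n Hn. rewrite HN by lia. apply HN2. lia.
Qed.

Theorem proposition5p5 (sigma2 mu q hstar : R) (Whf : R -> R -> R) :
  0 < sigma2 -> 0 <= q -> 0 < hstar -> hstar_ok sigma2 mu hstar ->
  (forall h, 0 < h < hstar -> is_Wh sigma2 mu q h (Whf h)) ->
  ((q = 0 /\ mu = 0) ->
     forall h x, 0 < h < hstar -> Zhpp h x -> DeltaW sigma2 mu q (Whf h) x h = 0) /\
  (0 < Rmax q (Rabs mu) ->
     (exists A0 h0, 0 < A0 /\ 0 < h0 /\
        forall h x, 0 < h < h0 -> Zhpp h x -> x * h ^ 2 <= 1 ->
          Rabs (DeltaW sigma2 mu q (Whf h) x h)
            <= A0 * h ^ 2 * (1 + x) * exp (alpha_p sigma2 mu q * x)) /\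
     (forall (hn : nat -> R) x,
        (forall n, 0 < hn n) ->
        (forall n, exists m : nat, hn n = INR m * hn (S n)) ->
        Un_decreasing hn -> Un_cv hn 0 ->
        (exists N, Zhpp (hn N) x) ->
        Un_cv (fun n => DeltaW sigma2 mu q (Whf (hn n)) x (hn n) / (hn n) ^ 2)
              (delta_limit sigma2 mu q x)) /\
     (forall x, q = 0 ->
        delta_limit sigma2 mu q x
        = - (2 / 3) * (mu ^ 2 * x / sigma2 ^ 3) * exp (- (2 * mu * x / sigma2)))).
Proof.
  intros Hs2 Hq Hhs Hok HW.
  assert (Hlp : forall h, 0 < h < hstar -> 0 < lp sigma2 mu h) by (intros; eapply lp_pos; eauto).
  assert (Hlm : forall h, 0 < h < hstar -> 0 <= lm sigma2 mu h) by (intros h Hh; apply (Hok h Hh)).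
  split.
  - intros [Hq0 Hmu0] h x Hh [k [Hk Hx]]. subst q mu x.
    destruct k as [|k]; [lia|].
    apply DeltaW_case1; try lra; auto.
  - intros Hpos. split; [|split].
    + destruct (G_bound sigma2 mu q Hs2 Hq Hpos) as [A0 [h0 [HA0 [Hh0 [Hh01 HB]]]]].
      exists A0, (Rmin h0 hstar). split; [exact HA0|]. split; [apply Rmin_pos; lra|].
      intros h x Hh [k [Hk Hx]] Hxh.
      pose proof (Rmin_l h0 hstar); pose proof (Rmin_r h0 hstar).
      destruct k as [|k]; [lia|]. subst x.
      rewrite DeltaW_Gf; try (apply Hlp; lra); try (apply Hlm; lra); try (apply HW; lra); auto; try lra.
      apply HB; try lra. pose proof (pos_INR (S k)); nra.
    + intros hn x Hhn Hnest Hdec Hcv HN. destruct HN as [N [k0 [Hk0 Hx]]].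
      assert (Hx0 : 0 < x) by (subst x; pose proof (lt_0_INR k0 ltac:(lia)); pose proof (Hhn N); nra).
      assert (Hgrid : forall j, exists k', x = INR (S k') * hn (N + j)%nat).
      { induction j.
        - destruct k0 as [|k0]; [lia|]. exists k0. rewrite Nat.add_0_r. exact Hx.
        - destruct IHj as [k' Hk']. destruct (Hnest (N + j)%nat) as [m Hm].
          destruct m as [|m]. { pose proof (Hhn (N + j)%nat). simpl in Hm. lra. }
          exists (Nat.pred (S k' * S m)). rewrite Nat.succ_pred_pos by lia.
          rewrite mult_INR. replace (N + S j)%nat with (S (N + j)) by lia. rewrite Hk', Hm. ring. }
      apply (Un_cv_ev _ (fun n => Gf sigma2 mu q x (hn n) / (hn n)^2)).
      * destruct (Hcv (Rmin (h1 sigma2 mu q) hstar)) as [N2 HN2].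
        { apply Rmin_pos; [apply h1_pos|]; lra. }
        exists (max N N2). intros n Hn.
        specialize (HN2 n ltac:(lia)). unfold R_dist in HN2. rewrite Rminus_0_r, Rabs_pos_eq in HN2 by (left; apply Hhn).
        pose proof (Rmin_l (h1 sigma2 mu q) hstar); pose proof (Rmin_r (h1 sigma2 mu q) hstar).
        destruct (Hgrid (n - N)%nat) as [k' Hk']. replace (N + (n - N))%nat with n in Hk' by lia.
        pose proof (Hhn n).
        rewrite Hk'. rewrite DeltaW_Gf; try (apply Hlp; lra); try (apply Hlm; lra); try (apply HW; lra); auto; try lra.
      * apply (lim_seq (fun h => Gf sigma2 mu q x h / h^2)); auto.
        apply G_lim; auto. lra.
    + intros x Hq0. subst q. apply q0_identity; auto.
Qed.
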